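(* Let $d\ge2$, $\alpha\in(0,1)$, $\epsilon\in(0,1)$. There exist constants $0<C_1\le C_2$ depending only on $d,\epsilon,\alpha$ such that for all sufficiently large $n$ and all $\boldsymbol\mu\in\{0,\dots,n\}^{d\times d}$ with $\mu_{rs}\ge\epsilon n$ for all $r\ne s$, $$C_1\frac{e^{-\vartheta(\boldsymbol\mu)}}{T_{K_d}(\boldsymbol\mu)^{1/2}}\le A(\boldsymbol\mu)\le C_2\frac{e^{-\vartheta(\boldsymbol\mu)}}{T_{K_d}(\boldsymbol\mu)^{1/2}},$$ where $A(\boldsymbol\mu)=\sum_{\boldsymbol\nu}\prod_{r\neq s}\binom{\mu_{rs}}{\nu_{rs}}\alpha^{\nu_{rs}}(1-\alpha)^{\mu_{rs}-\nu_{rs}}$, the sum over integer off-diagonal arrays $(\nu_{rs})_{r\ne s}$ with $0\le\nu_{rs}\le\mu_{rs}$ and $\sum_{s\ne r}\nu_{rs}=\sum_{s\ne r}\nu_{sr}$ for all $r$.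
   Context: $\mathcal F=\{\mathbf x\in\mathbb R^{d\times d}:\sum_s x_{rs}=\sum_s x_{sr}\ \forall r\}$. $D(p\|q)=p\log\frac pq+(1-p)\log\frac{1-p}{1-q}$. $\vartheta(\boldsymbol\mu)=\min\{\sum_{r\ne s}\mu_{rs}D(x_{rs}\|\alpha):\mathbf x\in[0,1]^{d\times d},\ \mathbf x\odot\boldsymbol\mu\in\mathcal F\}$, $\odot$ the entrywise product. $K_d$ is the multigraph on $\{1,\dots,d\}$ with one edge for each ordered pair $(r,s)$, $r\ne s$ (two parallel edges between every pair of distinct vertices); $T_{K_d}(\mathbf z)=\frac1{N(K_d)}\sum_T\prod_{(r,s)\in T}z_{rs}$ over spanning trees $T$ of $K_d$, with $N(K_d)=2^{d-1}d^{d-2}$ their number. *)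

(* Defs.v *)
From Stdlib Require Import Reals Lra Lia List Arith Binomial.
From Stdlib Require Import Relations Relation_Operators.
From Stdlib Require Import ClassicalEpsilon ClassicalDescription.
Import ListNotations.
Open Scope R_scope.

(* Indices of a d x d array are 0..d-1. Arrays are functions nat -> nat -> _ ;
   only the entries with r, s < d are ever used. *)

Definition rsum {I : Type} (l : list I) (f : I -> R) : R :=
  fold_right (fun i acc => f i + acc) 0 l.
Definition rprod {I : Type} (l : list I) (f : I -> R) : R :=
  fold_right (fun i acc => f i * acc) 1 l.

Definition indic (P : Prop) : R :=
  if excluded_middle_informative P then 1 else 0.

(* The ordered pairs (r,s), r <> s, r,s < d  (= edges of K_d, off-diagonal
   positions of a d x d array). *)
Definition offdiag (d : nat) : list (nat * nat) :=
  flat_map (fun r => map (fun s => (r, s))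
                         (filter (fun s => negb (Nat.eqb r s)) (seq 0 d)))
           (seq 0 d).

Definition inF (d : nat) (x : nat -> nat -> R) : Prop :=
  forall r, (r < d)%nat ->
    rsum (seq 0 d) (fun s => x r s) = rsum (seq 0 d) (fun s => x s r).

(* Binary relative entropy D(p||q) (Stdlib's ln 0 = 0, so 0 log 0 = 0). *)
Definition KL (p q : R) : R :=
  p * ln (p / q) + (1 - p) * ln ((1 - p) / (1 - q)).

Definition theta_obj (d : nat) (alpha : R) (mu : nat -> nat -> nat)
  (x : nat -> nat -> R) : R :=
  rsum (offdiag d) (fun e => INR (mu (fst e) (snd e)) * KL (x (fst e) (snd e)) alpha).

Definition theta_feasible (d : nat) (mu : nat -> nat -> nat)
  (x : nat -> nat -> R) : Prop :=
  (forall r s, (r < d)%nat -> (s < d)%nat -> 0 <= x r s <= 1) /\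
  inF d (fun r s => x r s * INR (mu r s)).

(* vartheta(mu) = min { theta_obj x : x feasible } (the minimum exists by
   compactness; we pick the minimum value with Hilbert's epsilon). *)
Definition is_theta_min (d : nat) (alpha : R) (mu : nat -> nat -> nat) (t : R) : Prop :=
  exists x, theta_feasible d mu x /\ t = theta_obj d alpha mu x /\
    forall y, theta_feasible d mu y -> theta_obj d alpha mu x <= theta_obj d alpha mu y.

Definition vartheta (d : nat) (alpha : R) (mu : nat -> nat -> nat) : R :=
  epsilon (inhabits 0) (is_theta_min d alpha mu).

Fixpoint powerset {A : Type} (l : list A) : list (list A) :=
  match l with
  | [] => [[]]
  | a :: l' => let p := powerset l' in p ++ map (cons a) p
  end.

Definition adj (E : list (nat * nat)) (a b : nat) : Prop :=
  In (a, b) E \/ In (b, a) E.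

Definition is_spanning_tree (d : nat) (E : list (nat * nat)) : Prop :=
  length E = (d - 1)%nat /\
  forall v, (v < d)%nat -> clos_refl_trans nat (adj E) 0%nat v.

Definition NKd (d : nat) : R :=
  rsum (powerset (offdiag d)) (fun E => indic (is_spanning_tree d E)).

Definition TKd (d : nat) (z : nat -> nat -> R) : R :=
  / NKd d * rsum (powerset (offdiag d))
    (fun E => indic (is_spanning_tree d E) * rprod E (fun e => z (fst e) (snd e))).

(* Enumeration of all off-diagonal arrays nu with 0 <= nu_rs <= mu_rs
   (diagonal entries and entries outside d x d are 0). *)
Definition upd (f : nat -> nat -> nat) (r s k : nat) : nat -> nat -> nat :=
  fun a b => if andb (Nat.eqb a r) (Nat.eqb b s) then k else f a b.

Fixpoint boxes (ps : list (nat * nat)) (mu : nat -> nat -> nat)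
  : list (nat -> nat -> nat) :=
  match ps with
  | [] => [fun _ _ => 0%nat]
  | (r, s) :: ps' =>
      flat_map (fun nu => map (fun k => upd nu r s k) (seq 0 (S (mu r s))))
               (boxes ps' mu)
  end.

Definition balanced (d : nat) (nu : nat -> nat -> nat) : Prop :=
  forall r, (r < d)%nat ->
    rsum (filter (fun s => negb (Nat.eqb s r)) (seq 0 d)) (fun s => INR (nu r s)) =
    rsum (filter (fun s => negb (Nat.eqb s r)) (seq 0 d)) (fun s => INR (nu s r)).

Definition Amu (d : nat) (alpha : R) (mu : nat -> nat -> nat) : R :=
  rsum (boxes (offdiag d) mu)
    (fun nu => indic (balanced d nu) *
       rprod (offdiag d) (fun e =>
         let m := mu (fst e) (snd e) in let k := nu (fst e) (snd e) in
         C m k * alpha ^ k * (1 - alpha) ^ (m - k))).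

(* Main.v *)
Require Import Defs.
From Stdlib Require Import Reals.
From Stdlib Require Import Lra Lia List Arith Binomial Permutation ZArith Relations Relation_Operators.
From Stdlib Require Import ClassicalEpsilon ClassicalDescription FunctionalExtensionality.
Import ListNotations.
Open Scope R_scope.

Lemma rsum_nil {I} (f : I -> R) : rsum [] f = 0. Proof. reflexivity. Qed.
Lemma rsum_cons {I} (a : I) l f : rsum (a :: l) f = f a + rsum l f. Proof. reflexivity. Qed.
Lemma rsum_app {I} (l1 l2 : list I) f : rsum (l1 ++ l2) f = rsum l1 f + rsum l2 f.
Proof. induction l1; simpl; [ring|]. unfold rsum in *; simpl. rewrite IHl1. ring. Qed.
Lemma rsum_ext {I} (l : list I) f g : (forall i, In i l -> f i = g i) -> rsum l f = rsum l g.
Proof. induction l; intros H; [reflexivity|]. rewrite !rsum_cons. rewrite H by (left; auto).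
 rewrite IHl; auto. intros; apply H; right; auto. Qed.
Lemma rsum_plus {I} (l : list I) f g : rsum l (fun i => f i + g i) = rsum l f + rsum l g.
Proof. induction l; [simpl; unfold rsum; simpl; ring|]. rewrite !rsum_cons, IHl. ring. Qed.
Lemma rsum_minus {I} (l : list I) f g : rsum l (fun i => f i - g i) = rsum l f - rsum l g.
Proof. induction l; [simpl; unfold rsum; simpl; ring|]. rewrite !rsum_cons, IHl. ring. Qed.
Lemma rsum_scal {I} (l : list I) c f : rsum l (fun i => c * f i) = c * rsum l f.
Proof. induction l; [unfold rsum; simpl; ring|]. rewrite !rsum_cons, IHl. ring. Qed.
Lemma rsum_scalr {I} (l : list I) c f : rsum l (fun i => f i * c) = rsum l f * c.
Proof. induction l; [unfold rsum; simpl; ring|]. rewrite !rsum_cons, IHl. ring. Qed.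
Lemma rsum_zero {I} (l : list I) : rsum l (fun _ => 0) = 0.
Proof. induction l; [reflexivity|]. rewrite rsum_cons, IHl; ring. Qed.
Lemma rsum_le {I} (l : list I) f g : (forall i, In i l -> f i <= g i) -> rsum l f <= rsum l g.
Proof. induction l; intros H; [unfold rsum; simpl; lra|]. rewrite !rsum_cons.
 assert (f a <= g a) by (apply H; left; auto). assert (rsum l f <= rsum l g) by (apply IHl; intros; apply H; right; auto). lra. Qed.
Lemma rsum_nonneg {I} (l : list I) f : (forall i, In i l -> 0 <= f i) -> 0 <= rsum l f.
Proof. intros H. rewrite <- (rsum_zero l). apply rsum_le; auto. Qed.
Lemma rsum_const {I} (l : list I) c : rsum l (fun _ => c) = INR (length l) * c.
Proof. induction l; [unfold rsum; simpl; ring|]. rewrite rsum_cons, IHl. simpl length. rewrite S_INR. ring. Qed.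
Lemma rsum_map {I J} (g : I -> J) l f : rsum (map g l) f = rsum l (fun i => f (g i)).
Proof. induction l; [reflexivity|]. simpl map. rewrite !rsum_cons, IHl. reflexivity. Qed.
Lemma rsum_flat_map {I J} (g : I -> list J) l f : rsum (flat_map g l) f = rsum l (fun i => rsum (g i) f).
Proof. induction l; [reflexivity|]. simpl flat_map. rewrite rsum_app, rsum_cons, IHl. reflexivity. Qed.
Lemma rsum_filter {I} (p : I -> bool) l f : rsum (filter p l) f = rsum l (fun i => if p i then f i else 0).
Proof. induction l; [reflexivity|]. simpl filter. destruct (p a) eqn:E; rewrite ?rsum_cons, IHl; rewrite ?E; ring. Qed.
Lemma rsum_swap {I J} (l1 : list I) (l2 : list J) f :
  rsum l1 (fun i => rsum l2 (fun j => f i j)) = rsum l2 (fun j => rsum l1 (fun i => f i j)).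
Proof. induction l1.
 - rewrite rsum_nil. symmetry. apply rsum_zero.
 - rewrite rsum_cons, IHl1, <- rsum_plus. reflexivity. Qed.
Lemma rsum_abs {I} (l : list I) f : Rabs (rsum l f) <= rsum l (fun i => Rabs (f i)).
Proof. induction l; [unfold rsum; simpl; rewrite Rabs_R0; lra|]. rewrite !rsum_cons.
 eapply Rle_trans; [apply Rabs_triang|]. lra. Qed.
Lemma rsum_single {I} (l : list I) f a : In a l -> (forall i, In i l -> 0 <= f i) -> f a <= rsum l f.
Proof. induction l; intros Ha H; [destruct Ha|]. rewrite rsum_cons. destruct Ha as [<-|Ha].
 - assert (0 <= rsum l f) by (apply rsum_nonneg; intros; apply H; right; auto). lra.
 - assert (0 <= f a0) by (apply H; left; auto). assert (f a <= rsum l f) by (apply IHl; auto; intros; apply H; right; auto). lra. Qed.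
Lemma rsum_bound {I} (l : list I) f c : (forall i, In i l -> Rabs (f i) <= c) -> Rabs (rsum l f) <= INR (length l) * c.
Proof. intros H. eapply Rle_trans; [apply rsum_abs|]. rewrite <- rsum_const. apply rsum_le; auto. Qed.
Lemma rsum_INR (l : list nat) (f : nat -> nat) : rsum l (fun i => INR (f i)) = INR (fold_right (fun i acc => (f i + acc)%nat) 0%nat l).
Proof. induction l; [reflexivity|]. rewrite rsum_cons, IHl. simpl. rewrite plus_INR. reflexivity. Qed.

Lemma rprod_cons {I} (a : I) l f : rprod (a :: l) f = f a * rprod l f. Proof. reflexivity. Qed.
Lemma rprod_app {I} (l1 l2 : list I) f : rprod (l1 ++ l2) f = rprod l1 f * rprod l2 f.
Proof. induction l1; simpl; [unfold rprod; simpl; ring|]. unfold rprod in *; simpl. rewrite IHl1. ring. Qed.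
Lemma rprod_ext {I} (l : list I) f g : (forall i, In i l -> f i = g i) -> rprod l f = rprod l g.
Proof. induction l; intros H; [reflexivity|]. rewrite !rprod_cons. rewrite H by (left; auto).
 rewrite IHl; auto. intros; apply H; right; auto. Qed.
Lemma rprod_nonneg {I} (l : list I) f : (forall i, In i l -> 0 <= f i) -> 0 <= rprod l f.
Proof. induction l; intros H; [unfold rprod; simpl; lra|]. rewrite rprod_cons.
 apply Rmult_le_pos; [apply H; left; auto| apply IHl; intros; apply H; right; auto]. Qed.
Lemma rprod_pos {I} (l : list I) f : (forall i, In i l -> 0 < f i) -> 0 < rprod l f.
Proof. induction l; intros H; [unfold rprod; simpl; lra|]. rewrite rprod_cons.
 apply Rmult_lt_0_compat; [apply H; left; auto| apply IHl; intros; apply H; right; auto]. Qed.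
Lemma rprod_le {I} (l : list I) f g : (forall i, In i l -> 0 <= f i <= g i) -> rprod l f <= rprod l g.
Proof. induction l; intros H; [unfold rprod; simpl; lra|]. rewrite !rprod_cons.
 assert (0 <= f a <= g a) by (apply H; left; auto).
 assert (0 <= rprod l f) by (apply rprod_nonneg; intros; apply H; right; auto).
 assert (rprod l f <= rprod l g) by (apply IHl; intros; apply H; right; auto).
 apply Rmult_le_compat; lra. Qed.
Lemma rprod_const {I} (l : list I) c : rprod l (fun _ => c) = c ^ length l.
Proof. induction l; [reflexivity|]. rewrite rprod_cons, IHl. reflexivity. Qed.
Lemma rprod_mult {I} (l : list I) f g : rprod l (fun i => f i * g i) = rprod l f * rprod l g.
Proof. induction l; [unfold rprod; simpl; ring|]. rewrite !rprod_cons, IHl. ring. Qed.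

Lemma indic_true (P : Prop) : P -> indic P = 1.
Proof. intros H; unfold indic; destruct (excluded_middle_informative P); tauto. Qed.
Lemma indic_false (P : Prop) : ~ P -> indic P = 0.
Proof. intros H; unfold indic; destruct (excluded_middle_informative P); tauto. Qed.
Lemma indic_01 (P : Prop) : 0 <= indic P <= 1.
Proof. unfold indic; destruct (excluded_middle_informative P); lra. Qed.
Lemma indic_iff (P Q : Prop) : (P <-> Q) -> indic P = indic Q.
Proof. intros H; unfold indic; destruct (excluded_middle_informative P), (excluded_middle_informative Q); tauto. Qed.
Lemma indic_forall {I} (l : list I) (P : I -> Prop) : indic (forall i, In i l -> P i) = rprod l (fun i => indic (P i)).
Proof. induction l.
 - apply indic_true. intros i [].
 - rewrite rprod_cons, <- IHl. destruct (classic (P a)) as [Ha|Ha].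
   + rewrite (indic_true (P a)) by auto. rewrite Rmult_1_l. apply indic_iff. split; intros H i Hi; [apply H; right; auto|].
     destruct Hi as [<-|]; auto.
   + rewrite (indic_false (P a)) by auto. rewrite Rmult_0_l. apply indic_false. intros H; apply Ha, H; left; auto. Qed.

Definition rng (mu : nat -> nat -> nat) (e : nat * nat) := seq 0 (S (mu (fst e) (snd e))).
Arguments rng : simpl never.

Fixpoint Iter (mu : nat -> nat -> nat) (ps : list (nat * nat)) (g : (nat -> nat -> nat) -> R)
  (nu : nat -> nat -> nat) : R :=
  match ps with
  | [] => g nu
  | e :: ps' => Iter mu ps' (fun w => rsum (rng mu e) (fun k => g (upd w (fst e) (snd e) k))) nu
  end.

Lemma boxes_Iter mu ps f : rsum (boxes ps mu) f = Iter mu ps f (fun _ _ => 0%nat).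
Proof. revert f. induction ps as [|[r s] ps IH]; intros f.
 - simpl. unfold rsum; simpl. ring.
 - cbn [boxes]. rewrite rsum_flat_map. cbn [Iter]. rewrite <- IH. apply rsum_ext. intros nu _.
   cbv beta. rewrite rsum_map. reflexivity. Qed.

Lemma Iter_ext mu ps g g' nu : (forall w, g w = g' w) -> Iter mu ps g nu = Iter mu ps g' nu.
Proof. intros H. replace g' with g; [reflexivity|]. apply functional_extensionality; auto. Qed.

Lemma Iter_le mu ps g g' nu : (forall w, g w <= g' w) -> Iter mu ps g nu <= Iter mu ps g' nu.
Proof. revert g g' nu. induction ps as [|e ps IH]; intros g g' nu H; cbn [Iter]; auto.
 apply IH. intros w. apply rsum_le. intros; apply H. Qed.

Lemma Iter_scal mu ps c g nu : Iter mu ps (fun w => c * g w) nu = c * Iter mu ps g nu.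
Proof. revert g nu. induction ps as [|e ps IH]; intros g nu; cbn [Iter]; auto.
 rewrite <- IH. apply Iter_ext. intros w. apply rsum_scal. Qed.

Lemma Iter_plus mu ps g g' nu : Iter mu ps (fun w => g w + g' w) nu = Iter mu ps g nu + Iter mu ps g' nu.
Proof. revert g g' nu. induction ps as [|e ps IH]; intros g g' nu; cbn [Iter]; auto.
 rewrite <- IH. apply Iter_ext. intros w. apply rsum_plus. Qed.

Lemma Iter_zero mu ps nu : Iter mu ps (fun _ => 0) nu = 0.
Proof. transitivity (Iter mu ps (fun w => 0 * 0) nu). apply Iter_ext; intros; ring.
 rewrite Iter_scal. ring. Qed.

Lemma Iter_nonneg mu ps g nu : (forall w, 0 <= g w) -> 0 <= Iter mu ps g nu.
Proof. intros H. rewrite <- (Iter_zero mu ps nu). apply Iter_le; auto. Qed.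

Lemma Iter_app mu l1 l2 g nu : Iter mu (l1 ++ l2) g nu = Iter mu l2 (fun w => Iter mu l1 g w) nu.
Proof. revert g. induction l1 as [|e l1 IH]; intros g; cbn [Iter app]; auto. Qed.

Lemma upd_comm (w : nat -> nat -> nat) a b c d j k : (a, b) <> (c, d) ->
  upd (upd w a b j) c d k = upd (upd w c d k) a b j.
Proof. intros H. apply functional_extensionality; intros x; apply functional_extensionality; intros y.
 unfold upd. destruct (Nat.eqb_spec x a), (Nat.eqb_spec y b), (Nat.eqb_spec x c), (Nat.eqb_spec y d); simpl; subst; auto.
 exfalso; auto. Qed.

Lemma Iter_perm mu ps ps' g nu : NoDup ps -> Permutation ps ps' -> Iter mu ps g nu = Iter mu ps' g nu.
Proof. intros Hn Hp. revert g nu. induction Hp; intros g nu.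
 - reflexivity.
 - cbn [Iter]. apply IHHp. inversion Hn; auto.
 - cbn [Iter]. apply Iter_ext. intros w. rewrite rsum_swap. apply rsum_ext; intros k _. apply rsum_ext; intros j _.
   destruct x as [a b], y as [c d]; simpl. rewrite upd_comm; auto. inversion Hn; subst.
   intros E. apply H1. rewrite E. left; auto.
 - rewrite IHHp1 by auto. apply IHHp2. eapply Permutation_NoDup; eauto. Qed.

Lemma upd_same (w : nat -> nat -> nat) a b k : upd w a b k a b = k.
Proof. unfold upd. rewrite !Nat.eqb_refl. reflexivity. Qed.
Lemma upd_other (w : nat -> nat -> nat) a b k x y : (x, y) <> (a, b) -> upd w a b k x y = w x y.
Proof. intros H. unfold upd. destruct (Nat.eqb_spec x a), (Nat.eqb_spec y b); subst; simpl; auto. exfalso; auto. Qed.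

Lemma Iter_prod mu ps (G : (nat -> nat -> nat) -> R) (h : (nat -> nat -> nat) -> nat * nat -> nat -> R) nu :
  NoDup ps ->
  (forall a, In a ps -> forall w k, G (upd w (fst a) (snd a) k) = G w) ->
  (forall a, In a ps -> forall w k, h (upd w (fst a) (snd a) k) = h w) ->
  Iter mu ps (fun w => G w * rprod ps (fun e => h w e (w (fst e) (snd e)))) nu =
  G nu * rprod ps (fun e => rsum (rng mu e) (h nu e)).
Proof. revert G nu. induction ps as [|a ps IH]; intros G nu Hn HG Hh.
 - simpl. reflexivity.
 - cbn [Iter]. inversion Hn; subst.
   rewrite (Iter_ext _ _ _ (fun w => (rsum (rng mu a) (h w a) * G w) * rprod ps (fun e => h w e (w (fst e) (snd e))))).
   + rewrite IH; auto.
     * rewrite rprod_cons. ring.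
     * intros b Hb w k. rewrite HG by (right; auto). rewrite Hh by (right; auto). reflexivity.
     * intros b Hb w k. apply Hh; right; auto.
   + intros w. rewrite <- rsum_scalr. rewrite <- rsum_scalr. apply rsum_ext. intros k _.
     rewrite rprod_cons. rewrite HG by (left; auto). rewrite Hh by (left; auto). rewrite upd_same.
     rewrite (rprod_ext ps _ (fun e => h w e (w (fst e) (snd e)))). ring.
     intros e He. rewrite upd_other; auto. intros E. apply H1.
     destruct e, a; simpl in E; inversion E; subst; auto. Qed.

Definition offs (d r : nat) := filter (fun s => negb (Nat.eqb s r)) (seq 0 d).

Lemma offdiag_In d r s : In (r, s) (offdiag d) <-> (r < d /\ s < d /\ r <> s)%nat.
Proof. unfold offdiag. rewrite in_flat_map. split.
 - intros [x [Hx Hy]]. rewrite in_map_iff in Hy. destruct Hy as [y [Hy Hy2]]. inversion Hy; subst.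
   rewrite filter_In in Hy2. destruct Hy2 as [H1 H2]. rewrite in_seq in Hx, H1.
   apply Bool.negb_true_iff, Nat.eqb_neq in H2. lia.
 - intros (H1 & H2 & H3). exists r. split; [rewrite in_seq; lia|]. rewrite in_map_iff. exists s. split; auto.
   rewrite filter_In. split; [rewrite in_seq; lia|]. apply Bool.negb_true_iff, Nat.eqb_neq; auto. Qed.

Lemma offs_In d r s : In s (offs d r) <-> (s < d /\ s <> r)%nat.
Proof. unfold offs. rewrite filter_In, in_seq. rewrite Bool.negb_true_iff, Nat.eqb_neq. lia. Qed.

Lemma offdiag_NoDup_gen (m l : list nat) : NoDup m -> NoDup l ->
  NoDup (flat_map (fun r => map (fun s => (r, s)) (filter (fun s => negb (Nat.eqb r s)) m)) l).
Proof. intros Hm Hl. induction l as [|a l IH]; simpl.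
 - constructor.
 - inversion Hl; subst. apply NoDup_app; auto.
   + apply FinFun.Injective_map_NoDup. intros x y E; inversion E; auto. apply NoDup_filter; auto.
   + intros [x y] G1 G2. rewrite in_map_iff in G1. destruct G1 as [z [E _]]. inversion E; subst.
     rewrite in_flat_map in G2. destruct G2 as [b [Hb Hb2]]. rewrite in_map_iff in Hb2. destruct Hb2 as [c [E2 _]].
     inversion E2; subst. auto. Qed.
Lemma offdiag_NoDup d : NoDup (offdiag d).
Proof. apply offdiag_NoDup_gen; apply seq_NoDup. Qed.

Lemma sum_offdiag d (g : nat -> nat -> R) :
  rsum (offdiag d) (fun e => g (fst e) (snd e)) = rsum (seq 0 d) (fun r => rsum (offs d r) (fun s => g r s)).
Proof. unfold offdiag. rewrite rsum_flat_map. apply rsum_ext. intros r _. rewrite rsum_map. simpl.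
 unfold offs. rewrite !rsum_filter. apply rsum_ext. intros s _. rewrite Nat.eqb_sym. reflexivity. Qed.

Lemma sum_offdiag_T d (g : nat -> nat -> R) :
  rsum (offdiag d) (fun e => g (fst e) (snd e)) = rsum (seq 0 d) (fun s => rsum (offs d s) (fun r => g r s)).
Proof. rewrite sum_offdiag. unfold offs. rewrite (rsum_ext (seq 0 d) _ (fun r => rsum (seq 0 d) (fun s => if negb (s =? r)%nat then g r s else 0))).
 2:{ intros; apply rsum_filter. } rewrite rsum_swap. apply rsum_ext. intros s _. rewrite rsum_filter.
 apply rsum_ext. intros r _. rewrite Nat.eqb_sym. reflexivity. Qed.

Lemma sum_seq_split d r (g : nat -> R) : (r < d)%nat -> rsum (seq 0 d) g = g r + rsum (offs d r) g.
Proof. intros Hr. unfold offs. rewrite rsum_filter.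
 assert (H : rsum (seq 0 d) (fun s => if (s =? r)%nat then g s else 0) = g r).
 { induction d. lia. rewrite seq_S, rsum_app. simpl plus. destruct (Nat.eq_dec r d).
   - subst. rewrite (rsum_ext _ _ (fun _ => 0)). rewrite rsum_zero. rewrite rsum_cons, Nat.eqb_refl, rsum_nil. ring.
     intros i Hi. rewrite in_seq in Hi. destruct (Nat.eqb_spec i d); [lia|auto].
   - rewrite IHd by lia. rewrite rsum_cons, rsum_nil. destruct (Nat.eqb_spec d r); [lia|]. ring. }
 rewrite <- H at 1. rewrite <- rsum_plus. apply rsum_ext. intros s _. destruct (s =? r)%nat; simpl; ring. Qed.

Lemma inF_offs d x : inF d x <-> forall r, (r < d)%nat -> rsum (offs d r) (fun s => x r s) = rsum (offs d r) (fun s => x s r).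
Proof. unfold inF. split; intros H r Hr; specialize (H r Hr).
 - rewrite (sum_seq_split d r) in H by auto. rewrite (sum_seq_split d r (fun s => x s r)) in H by auto. lra.
 - rewrite (sum_seq_split d r) by auto. rewrite (sum_seq_split d r (fun s => x s r)) by auto. lra. Qed.

Lemma circ_pot d (f : nat -> nat -> R) (l : nat -> R) :
  (forall r, (r < d)%nat -> rsum (offs d r) (fun s => f r s) = rsum (offs d r) (fun s => f s r)) ->
  rsum (offdiag d) (fun e => f (fst e) (snd e) * (l (fst e) - l (snd e))) = 0.
Proof. intros H. rewrite (rsum_ext _ _ (fun e => f (fst e) (snd e) * l (fst e) - f (fst e) (snd e) * l (snd e))) by (intros; ring).
 rewrite rsum_minus. rewrite (sum_offdiag d (fun r s => f r s * l r)). rewrite (sum_offdiag_T d (fun r s => f r s * l s)).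
 rewrite <- rsum_minus. rewrite (rsum_ext _ _ (fun _ => 0)). apply rsum_zero. intros r Hr. rewrite in_seq in Hr.
 rewrite rsum_scalr, rsum_scalr. rewrite H by lia. ring. Qed.

Lemma balanced_offs d nu : balanced d nu <-> forall r, (r < d)%nat ->
  rsum (offs d r) (fun s => INR (nu r s)) = rsum (offs d r) (fun s => INR (nu s r)).
Proof. reflexivity. Qed.

Lemma perm_filter_split {A} (p : A -> bool) l : Permutation l (filter p l ++ filter (fun a => negb (p a)) l).
Proof. induction l; simpl; auto. destruct (p a); simpl.
 - constructor; auto.
 - eapply Permutation_trans; [|apply Permutation_middle]. constructor; auto. Qed.

Lemma rsum_perm {I} (l l' : list I) f : Permutation l l' -> rsum l f = rsum l' f.
Proof. intros H; induction H; rewrite ?rsum_cons; try lra; congruence. Qed.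
Lemma rprod_perm {I} (l l' : list I) f : Permutation l l' -> rprod l f = rprod l' f.
Proof. intros H; induction H; rewrite ?rprod_cons; try congruence; ring. Qed.

Definition Sst d := filter (fun e : nat * nat => Nat.eqb (snd e) 0) (offdiag d).
Definition Oth d := filter (fun e : nat * nat => negb (Nat.eqb (snd e) 0)) (offdiag d).

Lemma Sst_In d e : In e (Sst d) <-> (1 <= fst e < d /\ snd e = 0)%nat.
Proof. destruct e as [r s]. unfold Sst. rewrite filter_In, offdiag_In. simpl. rewrite Nat.eqb_eq. lia. Qed.
Lemma Oth_In d e : In e (Oth d) <-> In e (offdiag d) /\ snd e <> 0%nat.
Proof. unfold Oth. rewrite filter_In, Bool.negb_true_iff, Nat.eqb_neq. tauto. Qed.
Lemma Sst_NoDup d : NoDup (Sst d). Proof. apply NoDup_filter, offdiag_NoDup. Qed.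
Lemma Oth_NoDup d : NoDup (Oth d). Proof. apply NoDup_filter, offdiag_NoDup. Qed.
Lemma perm_SO d : Permutation (offdiag d) (Sst d ++ Oth d).
Proof. apply perm_filter_split. Qed.

Lemma rsum_pick (l : list nat) a (g : nat -> R) : NoDup l -> In a l ->
  rsum l (fun s => if Nat.eqb s a then g s else 0) = g a.
Proof. induction l as [|b l IH]; intros Hn Ha; [destruct Ha|]. inversion Hn; subst. rewrite rsum_cons.
 destruct Ha as [<-|Ha].
 - rewrite Nat.eqb_refl. rewrite (rsum_ext _ _ (fun _ => 0)). rewrite rsum_zero; ring.
   intros i Hi. destruct (Nat.eqb_spec i b); subst; tauto.
 - destruct (Nat.eqb_spec b a); subst; [tauto|]. rewrite IH; auto. ring. Qed.

Lemma offs_NoDup d r : NoDup (offs d r). Proof. apply NoDup_filter, seq_NoDup. Qed.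

Definition Kf d (w : nat -> nat -> nat) r :=
  if Nat.eqb r 0 then 0 else
  rsum (offs d r) (fun s => INR (w s r)) - rsum (offs d r) (fun s => if Nat.eqb s 0 then 0 else INR (w r s)).

Lemma out_split d (w : nat -> nat -> nat) r : (1 <= r < d)%nat ->
  rsum (offs d r) (fun s => INR (w r s)) = INR (w r 0%nat) + rsum (offs d r) (fun s => if Nat.eqb s 0 then 0 else INR (w r s)).
Proof. intros Hr. rewrite <- (rsum_pick (offs d r) 0 (fun s => INR (w r s))).
 - rewrite <- rsum_plus. apply rsum_ext. intros s _. destruct (Nat.eqb s 0); ring.
 - apply offs_NoDup.
 - apply offs_In. lia. Qed.

Lemma total_flow d (w : nat -> nat -> nat) :
  rsum (seq 0 d) (fun r => rsum (offs d r) (fun s => INR (w r s)) - rsum (offs d r) (fun s => INR (w s r))) = 0.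
Proof. rewrite rsum_minus. rewrite <- (sum_offdiag d (fun r s => INR (w r s))). rewrite <- (sum_offdiag_T d (fun r s => INR (w r s))). ring. Qed.

Lemma bal_star d w : (1 <= d)%nat -> (balanced d w <-> forall e, In e (Sst d) -> INR (w (fst e) (snd e)) = Kf d w (fst e)).
Proof. intros Hd. rewrite balanced_offs. split.
 - intros H [r s] He. apply Sst_In in He. simpl in *. destruct He as [Hr ->]. unfold Kf.
   destruct (Nat.eqb_spec r 0); [lia|]. specialize (H r ltac:(lia)). rewrite out_split in H by lia. lra.
 - intros H. assert (Hr1 : forall r, (1 <= r < d)%nat -> rsum (offs d r) (fun s => INR (w r s)) = rsum (offs d r) (fun s => INR (w s r))).
   { intros r Hr. specialize (H (r, 0%nat) ltac:(apply Sst_In; simpl; lia)). simpl in H. unfold Kf in H.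
     destruct (Nat.eqb_spec r 0); [lia|]. rewrite out_split by lia. lra. }
   intros r Hr. destruct (Nat.eq_dec r 0) as [->|]; [|apply Hr1; lia].
   pose proof (total_flow d w) as T. replace d with (S (d - 1)) in T at 1 by lia. rewrite <- cons_seq in T.
   rewrite rsum_cons in T. rewrite (rsum_ext (seq 1 (d-1)) _ (fun _ => 0)) in T. rewrite rsum_zero in T. cbv beta in T. lra.
   intros i Hi. rewrite in_seq in Hi. rewrite Hr1 by lia. ring. Qed.

Lemma Kf_upd d w a k : In a (Sst d) -> Kf d (upd w (fst a) (snd a) k) = Kf d w.
Proof. intros Ha. apply Sst_In in Ha. destruct a as [r' s']; simpl in *. destruct Ha as [Hr ->].
 apply functional_extensionality. intros r. unfold Kf. destruct (Nat.eqb_spec r 0); auto. f_equal.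
 - apply rsum_ext. intros s _. rewrite upd_other; auto. intros E; inversion E; lia.
 - apply rsum_ext. intros s _. destruct (Nat.eqb_spec s 0); auto. rewrite upd_other; auto. intros E; inversion E; lia. Qed.

Theorem star_decomp d mu (p : nat * nat -> nat -> R) : (1 <= d)%nat ->
  rsum (boxes (offdiag d) mu) (fun w => indic (balanced d w) * rprod (offdiag d) (fun e => p e (w (fst e) (snd e)))) =
  Iter mu (Oth d) (fun w => rprod (Oth d) (fun e => p e (w (fst e) (snd e))) *
     rprod (Sst d) (fun e => rsum (rng mu e) (fun k => indic (INR k = Kf d w (fst e)) * p e k))) (fun _ _ => 0%nat).
Proof. intros Hd. rewrite boxes_Iter. rewrite (Iter_perm _ _ _ _ _ (offdiag_NoDup d) (perm_SO d)). rewrite Iter_app.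
 apply Iter_ext. intros w.
 rewrite (Iter_ext _ _ _ (fun w' => rprod (Oth d) (fun e => p e (w' (fst e) (snd e))) *
    rprod (Sst d) (fun e => (fun w'' e k => indic (INR k = Kf d w'' (fst e)) * p e k) w' e (w' (fst e) (snd e))))).
 - rewrite (Iter_prod mu (Sst d) (fun w' => rprod (Oth d) (fun e => p e (w' (fst e) (snd e))))
      (fun w'' e k => indic (INR k = Kf d w'' (fst e)) * p e k)). reflexivity.
   + apply Sst_NoDup.
   + intros a Ha w' k. apply rprod_ext. intros e He. rewrite upd_other; auto. intros E.
     apply Oth_In in He. apply Sst_In in Ha. destruct He as [_ He]. destruct a, e; simpl in *; inversion E; subst; lia.
   + intros a Ha w' k. rewrite Kf_upd; auto.
 - intros w'. rewrite (rprod_perm _ _ _ (perm_SO d)), rprod_app. cbv beta. rewrite rprod_mult.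
   rewrite (indic_iff _ _ (bal_star d w' Hd)). rewrite indic_forall. ring. Qed.

Definition pmf (m : nat) (p : R) (k : nat) : R := C m k * p ^ k * (1 - p) ^ (m - k).

Lemma rsum_seq_sum n f : rsum (seq 0 (S n)) f = sum_f_R0 f n.
Proof. induction n. - simpl. unfold rsum; simpl. ring.
 - rewrite seq_S, rsum_app, IHn, rsum_cons, rsum_nil. simpl (0 + S n)%nat. rewrite tech5. ring. Qed.

Lemma rsum_seq_shift a n f : rsum (seq (S a) n) f = rsum (seq a n) (fun i => f (S i)).
Proof. rewrite <- seq_shift, rsum_map. reflexivity. Qed.

Lemma C_pos n k : (k <= n)%nat -> 0 < C n k.
Proof. intros _. unfold C. apply Rdiv_lt_0_compat. apply INR_fact_lt_0. apply Rmult_lt_0_compat; apply INR_fact_lt_0. Qed.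

Lemma pmf_nonneg m p k : 0 <= p <= 1 -> 0 <= pmf m p k.
Proof. intros Hp. unfold pmf. apply Rmult_le_pos; [apply Rmult_le_pos|]; try (apply pow_le; lra).
 unfold C. apply Rle_mult_inv_pos. apply pos_INR. apply Rmult_lt_0_compat; apply INR_fact_lt_0. Qed.

Lemma pmf_sum m p : rsum (seq 0 (S m)) (pmf m p) = 1.
Proof. rewrite rsum_seq_sum. unfold pmf. rewrite <- binomial. replace (p + (1 - p)) with 1 by ring. apply pow1. Qed.

Lemma C_shift m i : (i <= m)%nat -> C (S m) (S i) * INR (S i) = INR (S m) * C m i.
Proof. intros H. unfold C. replace (S m - S i)%nat with (m - i)%nat by lia. rewrite !fact_simpl. rewrite !mult_INR.
 field. split; [apply INR_fact_neq_0|]. split; [apply INR_fact_neq_0|]. apply not_0_INR; lia. Qed.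

Lemma pmf_shift m p (g : nat -> R) :
  rsum (seq 0 (S (S m))) (fun k => pmf (S m) p k * INR k * g k) = INR (S m) * p * rsum (seq 0 (S m)) (fun i => pmf m p i * g (S i)).
Proof. rewrite <- cons_seq, rsum_cons, rsum_seq_shift. simpl INR at 1. rewrite Rmult_0_r, Rmult_0_l, Rplus_0_l.
 rewrite <- rsum_scal. apply rsum_ext. intros i Hi. rewrite in_seq in Hi. unfold pmf.
 replace (S m - S i)%nat with (m - i)%nat by lia. replace (C (S m) (S i) * p ^ S i * (1 - p) ^ (m - i) * INR (S i) * g (S i)) with ((C (S m) (S i) * INR (S i)) * p ^ S i * (1 - p) ^ (m - i) * g (S i)) by ring.
 rewrite C_shift by lia. simpl pow. ring. Qed.

Lemma pmf_mean m p : rsum (seq 0 (S m)) (fun k => pmf m p k * INR k) = INR m * p.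
Proof. destruct m. - unfold rsum; simpl. ring.
 - rewrite (rsum_ext _ _ (fun k => pmf (S m) p k * INR k * 1)) by (intros; ring). rewrite pmf_shift.
   rewrite (rsum_ext _ _ (pmf m p)) by (intros; ring). rewrite pmf_sum. ring. Qed.

Lemma pmf_fact2 m p : rsum (seq 0 (S m)) (fun k => pmf m p k * INR k * (INR k - 1)) = INR m * (INR m - 1) * p ^ 2.
Proof. destruct m. - unfold rsum; simpl. ring.
 - rewrite pmf_shift. rewrite (rsum_ext _ _ (fun i => pmf m p i * INR i)). rewrite pmf_mean. rewrite S_INR. ring.
   intros i _. rewrite S_INR. ring. Qed.

Lemma pmf_var m p : rsum (seq 0 (S m)) (fun k => pmf m p k * (INR k - INR m * p) ^ 2) = INR m * p * (1 - p).
Proof. rewrite (rsum_ext _ _ (fun k => pmf m p k * INR k * (INR k - 1) + (1 - 2 * INR m * p) * (pmf m p k * INR k) + (INR m * p)^2 * pmf m p k)) by (intros; ring).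
 rewrite !rsum_plus, !rsum_scal, pmf_fact2, pmf_mean, pmf_sum. ring. Qed.

Lemma pmf_ratio m p k : (k < m)%nat -> pmf m p (S k) * (INR (S k) * (1 - p)) = pmf m p k * (INR (m - k) * p).
Proof. intros H. unfold pmf. rewrite pascal_step3 by auto. replace (m - k)%nat with (S (m - S k)) by lia.
 simpl pow. field. apply not_0_INR; lia. Qed.

Lemma pmf_cheb m p t : 0 <= p <= 1 -> 0 < t ->
  rsum (seq 0 (S m)) (fun k => pmf m p k * indic (t < Rabs (INR k - INR m * p))) <= INR m * p * (1 - p) / t ^ 2.
Proof. intros Hp Ht. rewrite <- pmf_var. unfold Rdiv. rewrite <- rsum_scalr. apply rsum_le. intros k _.
 pose proof (pmf_nonneg m p k Hp). unfold indic. destruct (excluded_middle_informative _) as [H1|H1].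
 - rewrite Rmult_1_r. rewrite Rmult_assoc. rewrite <- (Rmult_1_r (pmf m p k)) at 1. apply Rmult_le_compat_l; auto.
   assert (t ^ 2 < (INR k - INR m * p) ^ 2). { rewrite <- (pow2_abs (INR k - _)). pose proof (Rabs_pos (INR k - INR m * p)). simpl. nra. }
   assert (0 < t ^ 2) by (apply pow_lt; lra). apply (Rmult_le_reg_r (t ^ 2)); auto. rewrite Rmult_assoc, Rinv_l by lra. lra.
 - rewrite Rmult_0_r. apply Rmult_le_pos; [apply Rmult_le_pos; auto; apply pow2_ge_0|]. apply Rlt_le, Rinv_0_lt_compat, pow_lt; lra. Qed.

Lemma exp_le_exp x y : x <= y -> exp x <= exp y.
Proof. intros H. destruct (Rle_lt_or_eq_dec _ _ H). apply Rlt_le, exp_increasing; auto. subst; lra. Qed.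

Lemma exp_pow_n a n : exp a ^ n = exp (INR n * a).
Proof. induction n. simpl. rewrite Rmult_0_l, exp_0. reflexivity. simpl pow. rewrite IHn, <- exp_plus, S_INR. f_equal; ring. Qed.

Lemma one_minus_ge_exp x : 0 <= x <= 1/2 -> exp (-2 * x) <= 1 - x.
Proof. intros Hx. pose proof (exp_ineq1_le (2 * x)). replace (-2 * x) with (- (2 * x)) by ring. rewrite exp_Ropp.
 assert (0 < exp (2 * x)) by apply exp_pos. apply (Rmult_le_reg_l (exp (2 * x))); auto. rewrite Rinv_r by lra. nra. Qed.

Lemma pow_ge_exp x n : 0 <= x <= 1/2 -> exp (-2 * x * INR n) <= (1 - x) ^ n.
Proof. intros Hx. replace (-2 * x * INR n) with (INR n * (-2 * x)) by ring. rewrite <- exp_pow_n.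
 apply pow_incr. split. apply Rlt_le, exp_pos. apply one_minus_ge_exp; auto. Qed.

Lemma chain (f : nat -> R) c (P : nat -> Prop) : 0 <= c ->
  (forall k, P k -> c * f k <= f (S k) /\ c * f (S k) <= f k) ->
  forall n k1, (forall j, (k1 <= j < k1 + n)%nat -> P j) -> c ^ n * f k1 <= f (k1 + n)%nat /\ c ^ n * f (k1 + n)%nat <= f k1.
Proof. intros Hc H n. induction n; intros k1 Hj.
 - rewrite Nat.add_0_r. simpl. lra.
 - destruct (IHn k1) as [H1 H2]. intros j Hj2; apply Hj; lia.
   destruct (H (k1 + n)%nat) as [H3 H4]. apply Hj; lia. replace (k1 + S n)%nat with (S (k1 + n)) by lia.
   simpl pow. assert (0 <= c ^ n) by (apply pow_le; auto). split; nra. Qed.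

Lemma count_window N x L : rsum (seq 0 N) (fun k => indic (x <= INR k <= x + L)) <= Rmax 0 (L + 1).
Proof. revert x L. induction N; intros x L.
 - unfold rsum; simpl. apply Rmax_l.
 - rewrite seq_S, rsum_app, rsum_cons, rsum_nil. simpl (0 + N)%nat. destruct (classic (x <= INR N <= x + L)) as [H|H].
   + rewrite indic_true by auto. rewrite (rsum_ext _ _ (fun k => indic (x <= INR k <= x + (INR N - 1 - x)))).
     * specialize (IHN x (INR N - 1 - x)). unfold Rmax in *. destruct (Rle_dec 0 (INR N - 1 - x + 1)), (Rle_dec 0 (L + 1)); lra.
     * intros k Hk. rewrite in_seq in Hk. apply indic_iff. assert (INR k + 1 <= INR N). { rewrite <- S_INR. apply le_INR. lia. } lra.
   + rewrite indic_false by auto. specialize (IHN x L). lra. Qed.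

Lemma ratio_step m p k A B s : 0 < p < 1 -> (k < m)%nat -> 0 < s -> s * s = INR m -> 0 <= A ->
  Rabs (INR k - INR m * p) <= A * s -> 0 < INR m * p * (1 - p) - A * s ->
  A * INR m + s <= B * (INR m * p * (1 - p) - A * s) ->
  (1 - B / s) * pmf m p k <= pmf m p (S k) /\ (1 - B / s) * pmf m p (S k) <= pmf m p k.
Proof. intros Hp Hk Hs Hss HA Hu HD HB.
 pose proof (pmf_ratio m p k Hk) as E. rewrite S_INR, minus_INR in E by lia.
 set (a := pmf m p k) in *. set (b := pmf m p (S k)) in *.
 assert (Ha : 0 <= a) by (apply pmf_nonneg; lra). assert (Hb : 0 <= b) by (apply pmf_nonneg; lra).
 set (t := B / s). assert (Ht : t * s = B) by (unfold t; field; lra).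
 set (D := INR m * p * (1 - p)) in *. set (u := INR k - INR m * p) in *.
 assert (Hkm : INR k + 1 <= INR m). { rewrite <- S_INR. apply le_INR; lia. }
 assert (Hk0 : 0 <= INR k) by apply pos_INR.
 assert (HtD : A * s + 1 <= t * (D - A * s)).
 { apply (Rmult_le_reg_r s); auto. replace (t * (D - A * s) * s) with ((t * s) * (D - A * s)) by ring. rewrite Ht. nra. }
 assert (Hua : - (A * s) <= u <= A * s) by (unfold Rabs in Hu; destruct (Rcase_abs u); lra).
 assert (Ht0 : 0 <= t). { destruct (Rle_dec 0 t); auto. nra. }
 assert (HY : (INR k + 1) * (1 - p) = D + u * (1 - p) + (1 - p)) by (unfold D, u; ring).
 assert (HX : (INR m - INR k) * p = D - u * p) by (unfold D, u; ring).
 assert (HuY : D - A * s <= D + u * (1 - p) + (1 - p)) by nra.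
 assert (HuX : D - A * s <= D - u * p) by nra.
 split.
 - assert (Y0 : 0 < (INR k + 1) * (1 - p)) by nra.
   apply (Rmult_le_reg_r ((INR k + 1) * (1 - p))); auto. rewrite E.
   assert ((1 - t) * ((INR k + 1) * (1 - p)) <= (INR m - INR k) * p).
   { rewrite HY, HX. assert (t * (D - A * s) <= t * (D + u * (1 - p) + (1 - p))) by (apply Rmult_le_compat_l; lra). nra. }
   fold t. nra.
 - assert (X0 : 0 < (INR m - INR k) * p) by nra.
   apply (Rmult_le_reg_r ((INR m - INR k) * p)); auto. rewrite <- E.
   assert ((1 - t) * ((INR m - INR k) * p) <= (INR k + 1) * (1 - p)).
   { rewrite HY, HX. assert (t * (D - A * s) <= t * (D - u * p)) by (apply Rmult_le_compat_l; lra). nra. }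
   fold t. nra. Qed.

Lemma pq_lower p dl : 0 < dl <= 1/2 -> dl <= p <= 1 - dl -> dl / 2 <= p * (1 - p).
Proof. intros Hd Hp. nra. Qed.

Lemma win_step m p k A dl s : 0 < dl <= 1/2 -> dl <= p <= 1 - dl -> 1 <= s -> s * s = INR m -> 0 <= A ->
  4 * A / dl <= s -> (k < m)%nat -> Rabs (INR k - INR m * p) <= A * s ->
  (1 - (4 * (A + 1) / dl) / s) * pmf m p k <= pmf m p (S k) /\
  (1 - (4 * (A + 1) / dl) / s) * pmf m p (S k) <= pmf m p k.
Proof. intros Hd Hp Hs Hss HA HsA Hk Hu. pose proof (pq_lower p dl Hd Hp) as Hpq.
 assert (HAs : A * s <= dl * INR m / 4). { rewrite <- Hss. apply (Rmult_le_reg_r (4 / dl)). apply Rdiv_lt_0_compat; lra.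
   replace (dl * (s * s) / 4 * (4 / dl)) with (s * s) by (field; lra). replace (A * s * (4 / dl)) with (4 * A / dl * s) by (field; lra). nra. }
 assert (HD : dl * INR m / 2 <= INR m * p * (1 - p)). { assert (0 <= INR m) by apply pos_INR. nra. }
 assert (Hm1 : 1 <= INR m) by nra.
 apply (ratio_step m p k A (4 * (A + 1) / dl) s); try lra.
 - auto.
 - nra.
 - assert (4 * (A + 1) / dl * (dl * INR m / 4) = (A + 1) * INR m) by (field; lra).
   assert (0 <= 4 * (A + 1) / dl) by (apply Rle_mult_inv_pos; lra).
   assert (4 * (A + 1) / dl * (dl * INR m / 4) <= 4 * (A + 1) / dl * (INR m * p * (1 - p) - A * s)) by (apply Rmult_le_compat_l; lra).
   nra. Qed.

Lemma argmax_nat (f : nat -> R) N : exists k0, (k0 <= N)%nat /\ forall k, (k <= N)%nat -> f k <= f k0.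
Proof. induction N.
 - exists 0%nat. split; auto. intros k Hk. replace k with 0%nat by lia. lra.
 - destruct IHN as [k0 [Hk0 H]]. destruct (Rle_dec (f (S N)) (f k0)).
   + exists k0. split; [lia|]. intros k Hk. destruct (Nat.eq_dec k (S N)); subst; auto. apply H; lia.
   + exists (S N). split; auto. intros k Hk. destruct (Nat.eq_dec k (S N)); subst; [lra|]. specialize (H k ltac:(lia)). lra. Qed.

Lemma pmf_pos m p k : 0 < p < 1 -> (k <= m)%nat -> 0 < pmf m p k.
Proof. intros Hp Hk. unfold pmf. apply Rmult_lt_0_compat; [apply Rmult_lt_0_compat|]; try (apply pow_lt; lra). apply C_pos; auto. Qed.

Lemma rsum_seq_offset a n f : rsum (seq a n) f = rsum (seq 0 n) (fun i => f (a + i)%nat).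
Proof. revert f. induction a; intros f. simpl. reflexivity. rewrite rsum_seq_shift, IHa. apply rsum_ext. intros. f_equal. Qed.

Lemma rsum_sub_seq (f : nat -> R) a n m : (a + n <= m)%nat -> (forall i, 0 <= f i) -> rsum (seq a n) f <= rsum (seq 0 m) f.
Proof. intros H Hf. replace m with (a + n + (m - a - n))%nat by lia. rewrite !seq_app, !rsum_app. simpl (0 + a)%nat.
 assert (0 <= rsum (seq 0 a) f) by (apply rsum_nonneg; auto).
 assert (0 <= rsum (seq (0 + (a + n)) (m - a - n)) f) by (apply rsum_nonneg; auto). lra. Qed.

Lemma sqrt_nat_bounds m s : s * s = INR m -> 0 <= s -> INR (Nat.sqrt m) <= s /\ s < INR (Nat.sqrt m) + 1.
Proof. intros Hs Hs0. destruct (Nat.sqrt_spec' m) as [H1 H2]. apply le_INR in H1. apply lt_INR in H2.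
 rewrite mult_INR in H1, H2. rewrite S_INR in H2. pose proof (pos_INR (Nat.sqrt m)). split; nra. Qed.

Lemma mode_loc m p k0 : 0 < p < 1 -> (k0 <= m)%nat -> (forall k, (k <= m)%nat -> pmf m p k <= pmf m p k0) ->
  Rabs (INR k0 - INR m * p) <= 1.
Proof. intros Hp Hk0 H. assert (Hm : INR k0 <= INR m) by (apply le_INR; auto).
 assert (L : INR m * p - 1 <= INR k0).
 { destruct (Nat.eq_dec k0 m) as [->|Hne]. pose proof (pos_INR m). nra.
   pose proof (pmf_ratio m p k0 ltac:(lia)) as E. rewrite S_INR, minus_INR in E by lia.
   pose proof (H (S k0) ltac:(lia)). pose proof (pmf_pos m p k0 Hp Hk0). pose proof (pos_INR k0).
   assert (pmf m p k0 * ((INR m - INR k0) * p) <= pmf m p k0 * ((INR k0 + 1) * (1 - p))) by (rewrite <- E; apply Rmult_le_compat_r; nra).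
   assert ((INR m - INR k0) * p <= (INR k0 + 1) * (1 - p)) by (apply (Rmult_le_reg_l (pmf m p k0)); auto). nra. }
 assert (U : INR k0 <= INR m * p + 1).
 { destruct k0 as [|k1]. simpl. assert (0 <= INR m) by apply pos_INR. nra.
   pose proof (pmf_ratio m p k1 ltac:(lia)) as E. rewrite S_INR, minus_INR in E by lia.
   pose proof (H k1 ltac:(lia)). pose proof (pmf_pos m p (S k1) Hp Hk0). pose proof (pos_INR k1).
   rewrite S_INR in Hm.
   assert (pmf m p (S k1) * ((INR k1 + 1) * (1 - p)) <= pmf m p (S k1) * ((INR m - INR k1) * p)) by (rewrite E; apply Rmult_le_compat_r; nra).
   assert ((INR k1 + 1) * (1 - p) <= (INR m - INR k1) * p) by (apply (Rmult_le_reg_l (pmf m p (S k1))); auto). rewrite S_INR. nra. }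
 unfold Rabs. destruct (Rcase_abs _); lra. Qed.

Theorem pmf_upper m p dl : 0 < dl <= 1/2 -> dl <= p <= 1 - dl -> 24 / dl <= sqrt (INR m) ->
  forall k, (k <= m)%nat -> pmf m p k <= exp (2 * (12 / dl)) / sqrt (INR m).
Proof. intros Hd Hp Hs k Hk. set (s := sqrt (INR m)) in *.
 assert (Hss : s * s = INR m) by (apply sqrt_sqrt, pos_INR).
 assert (H48 : 48 <= 24 / dl). { apply (Rmult_le_reg_r dl); [lra|]. unfold Rdiv. rewrite Rmult_assoc, Rinv_l by lra. nra. }
 assert (Hs1 : 1 <= s) by lra.
 assert (Hp' : 0 < p < 1) by lra.
 destruct (argmax_nat (pmf m p) m) as [k0 [Hk0 Hmax]].
 pose proof (mode_loc m p k0 Hp' Hk0 Hmax) as Hmode.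
 set (J := Nat.sqrt m). destruct (sqrt_nat_bounds m s Hss ltac:(lra)) as [HJ1 HJ2]. fold J in HJ1, HJ2.
 assert (HdS : 24 <= dl * s). { apply (Rmult_le_reg_r (/ dl)). apply Rinv_0_lt_compat; lra.
   replace (dl * s * / dl) with s by (field; lra). exact Hs. }
 assert (HkJ : (k0 + J <= m)%nat).
 { apply INR_le. rewrite plus_INR. unfold Rabs in Hmode. destruct (Rcase_abs (INR k0 - INR m * p)); nra. }
 set (B := 4 * (2 + 1) / dl).
 assert (HB : B = 12 / dl) by (unfold B; field; lra).
 assert (HB2 : 2 * B <= s) by (rewrite HB; replace (2 * (12 / dl)) with (24 / dl) by (field; lra); lra).
 assert (HBs : B / s <= 1/2). { unfold Rdiv. apply (Rmult_le_reg_r s); [lra|]. rewrite Rmult_assoc, Rinv_l by lra. lra. }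
 assert (HBs0 : 0 <= B / s) by (rewrite HB; apply Rle_mult_inv_pos; [apply Rle_mult_inv_pos|]; lra).
 assert (Hstep : forall j, (j < m)%nat /\ Rabs (INR j - INR m * p) <= 2 * s ->
   (1 - B / s) * pmf m p j <= pmf m p (S j) /\ (1 - B / s) * pmf m p (S j) <= pmf m p j).
 { intros j [Hj1 Hj2]. apply (win_step m p j 2 dl s); auto; try lra.
   }
 assert (Hch : forall i, (i <= J)%nat -> exp (-2 * B) * pmf m p k0 <= pmf m p (k0 + i)).
 { intros i Hi. destruct (chain (pmf m p) (1 - B / s) _ ltac:(lra) Hstep i k0) as [H1 _].
   - intros j Hj. split; [lia|]. assert (INR k0 <= INR j <= INR k0 + INR J).
     { split; [apply le_INR; lia|]. rewrite <- plus_INR. apply le_INR; lia. }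
     unfold Rabs in *. destruct (Rcase_abs (INR k0 - INR m * p)), (Rcase_abs (INR j - INR m * p)); lra.
   - eapply Rle_trans; [|exact H1]. apply Rmult_le_compat_r. apply pmf_nonneg; lra.
     eapply Rle_trans; [|apply pow_ge_exp; lra]. apply exp_le_exp.
     assert (INR i <= INR J) by (apply le_INR; auto).
     assert (B / s * INR i <= B / s * s) by (apply Rmult_le_compat_l; lra).
     replace (B / s * s) with B in H0 by (field; lra). lra. }
 assert (Hsum : INR (S J) * (exp (-2 * B) * pmf m p k0) <= 1).
 { rewrite <- (pmf_sum m p). replace (INR (S J) * (exp (-2 * B) * pmf m p k0)) with (rsum (seq 0 (S J)) (fun _ => exp (-2 * B) * pmf m p k0)) by (rewrite rsum_const, length_seq; reflexivity). eapply Rle_trans; [|apply (rsum_sub_seq _ k0 (S J))].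
   - rewrite (rsum_seq_offset k0). apply rsum_le. intros i Hi. rewrite in_seq in Hi. apply Hch. lia.
   - lia.
   - intros; apply pmf_nonneg; lra. }
 rewrite S_INR in Hsum. pose proof (pmf_nonneg m p k0 ltac:(lra)).
 assert (E1 : exp (2 * B) * exp (-2 * B) = 1) by (rewrite <- exp_plus; replace (2 * B + -2 * B) with 0 by ring; apply exp_0).
 assert (Hk0s : pmf m p k0 * s <= exp (2 * B)).
 { pose proof (exp_pos (2 * B)). assert (pmf m p k0 * s <= pmf m p k0 * (INR J + 1)) by (apply Rmult_le_compat_l; lra).
   assert (H3 : exp (2 * B) * ((INR J + 1) * (exp (-2 * B) * pmf m p k0)) <= exp (2 * B) * 1) by (apply Rmult_le_compat_l; lra).
   replace (exp (2 * B) * ((INR J + 1) * (exp (-2 * B) * pmf m p k0))) with ((exp (2 * B) * exp (-2 * B)) * (pmf m p k0 * (INR J + 1))) in H3 by ring.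
   rewrite E1 in H3. lra. }
 rewrite <- HB. apply (Rle_trans _ (pmf m p k0)); [apply Hmax; auto|].
 apply (Rmult_le_reg_r s); [lra|]. unfold Rdiv. rewrite Rmult_assoc, Rinv_l by lra. lra.
Qed.

Theorem pmf_lower m p dl A : 0 < dl <= 1/2 -> dl <= p <= 1 - dl -> 1 <= A -> 8 * (A + 2) / dl <= sqrt (INR m) ->
  forall k, (k <= m)%nat -> Rabs (INR k - INR m * p) <= A * sqrt (INR m) ->
  exp (-2 * (4 * (A + 1 + 1) / dl) * (A + 1)) / 4 / sqrt (INR m) <= pmf m p k.
Proof. intros Hd Hp HA Hs k Hk Hkw. set (s := sqrt (INR m)) in *.
 assert (Hss : s * s = INR m) by (apply sqrt_sqrt, pos_INR).
 assert (Hdi : 0 < / dl) by (apply Rinv_0_lt_compat; lra).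
 assert (H8 : 1 <= 8 * (A + 2) / dl). { unfold Rdiv. assert (2 <= / dl). { apply (Rmult_le_reg_l dl); [lra|]. rewrite Rinv_r by lra. lra. } nra. }
 assert (Hs1 : 1 <= s) by lra.
 assert (Hp' : 0 < p < 1) by lra.
 set (B := 4 * (A + 1 + 1) / dl).
 assert (HB2 : 2 * B <= s) by (unfold B; replace (2 * (4 * (A + 1 + 1) / dl)) with (8 * (A + 2) / dl) by (field; lra); lra).
 assert (HBs : B / s <= 1/2). { unfold Rdiv. apply (Rmult_le_reg_r s); [lra|]. rewrite Rmult_assoc, Rinv_l by lra. lra. }
 assert (HB0 : 0 <= B) by (unfold B; unfold Rdiv; nra).
 assert (HBs0 : 0 <= B / s) by (apply Rle_mult_inv_pos; lra).
 assert (Hstep : forall j, (j < m)%nat /\ Rabs (INR j - INR m * p) <= (A + 1) * s ->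
   (1 - B / s) * pmf m p j <= pmf m p (S j) /\ (1 - B / s) * pmf m p (S j) <= pmf m p j).
 { intros j [Hj1 Hj2]. apply (win_step m p j (A + 1) dl s); auto; try lra.
   }
 set (X := 2 * B * (A + 1)).
 assert (Hcn : forall n, INR n <= (A + 1) * s -> exp (- X) <= (1 - B / s) ^ n).
 { intros n Hn. eapply Rle_trans; [|apply pow_ge_exp; lra]. apply exp_le_exp.
   assert (B / s * INR n <= B / s * ((A + 1) * s)) by (apply Rmult_le_compat_l; lra).
   replace (B / s * ((A + 1) * s)) with (B * (A + 1)) in H by (field; lra). unfold X. lra. }
 assert (Hab : forall x, Rabs x <= s -> - s <= x <= s) by (intros x Hx; unfold Rabs in Hx; destruct (Rcase_abs x); lra).
 assert (Hab2 : - (A * s) <= INR k - INR m * p <= A * s) by (unfold Rabs in Hkw; destruct (Rcase_abs (INR k - INR m * p)); lra).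
 assert (Hcmp : forall k', (k' <= m)%nat -> Rabs (INR k' - INR m * p) <= s -> exp (- X) * pmf m p k' <= pmf m p k).
 { intros k' Hk' Hw. apply Hab in Hw. destruct (le_lt_dec k' k) as [Hle|Hlt].
   - destruct (chain (pmf m p) (1 - B / s) _ ltac:(lra) Hstep (k - k') k') as [H1 _].
     + intros j Hj. split; [lia|]. assert (INR k' <= INR j <= INR k) by (split; apply le_INR; lia).
       unfold Rabs. destruct (Rcase_abs (INR j - INR m * p)); nra.
     + replace (k' + (k - k'))%nat with k in H1 by lia. eapply Rle_trans; [|exact H1].
       apply Rmult_le_compat_r. apply pmf_nonneg; lra. apply Hcn. rewrite minus_INR by lia.
       assert (INR k' <= INR k) by (apply le_INR; lia). nra.
   - destruct (chain (pmf m p) (1 - B / s) _ ltac:(lra) Hstep (k' - k) k) as [_ H1].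
     + intros j Hj. split; [lia|]. assert (INR k <= INR j <= INR k') by (split; apply le_INR; lia).
       unfold Rabs. destruct (Rcase_abs (INR j - INR m * p)); nra.
     + replace (k + (k' - k))%nat with k' in H1 by lia. eapply Rle_trans; [|exact H1].
       apply Rmult_le_compat_r. apply pmf_nonneg; lra. apply Hcn. rewrite minus_INR by lia.
       assert (INR k <= INR k') by (apply le_INR; lia). nra. }
 pose proof (pmf_cheb m p s ltac:(lra) ltac:(lra)) as Hcheb.
 replace (INR m * p * (1 - p) / s ^ 2) with (p * (1 - p)) in Hcheb by (simpl; rewrite <- Hss; field; lra).
 assert (Hin : 3 / 4 <= rsum (seq 0 (S m)) (fun k' => pmf m p k' * indic (Rabs (INR k' - INR m * p) <= s))).
 { assert (rsum (seq 0 (S m)) (fun k' => pmf m p k' * indic (Rabs (INR k' - INR m * p) <= s)) =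
      1 - rsum (seq 0 (S m)) (fun k' => pmf m p k' * indic (s < Rabs (INR k' - INR m * p)))).
   { rewrite <- (pmf_sum m p), <- rsum_minus. apply rsum_ext. intros k' _.
     destruct (Rle_lt_dec (Rabs (INR k' - INR m * p)) s).
     - rewrite indic_true, indic_false by lra. ring.
     - rewrite indic_false, indic_true by lra. ring. }
   assert (p * (1 - p) <= 1/4) by (pose proof (pow2_ge_0 (p - 1/2)); simpl in *; nra). lra. }
 set (K := exp X).
 assert (HK : exp (- X) * K = 1) by (unfold K; rewrite <- exp_plus; replace (- X + X) with 0 by ring; apply exp_0).
 assert (HKp : 0 < K) by apply exp_pos.
 assert (Hup : rsum (seq 0 (S m)) (fun k' => pmf m p k' * indic (Rabs (INR k' - INR m * p) <= s)) <=
   K * pmf m p k * rsum (seq 0 (S m)) (fun k' => indic (INR m * p - s <= INR k' <= INR m * p - s + 2 * s))).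
 { rewrite <- rsum_scal. apply rsum_le. intros k' Hk'. rewrite in_seq in Hk'.
   rewrite (indic_iff _ (INR m * p - s <= INR k' <= INR m * p - s + 2 * s)).
   2:{ split; intros Hh. apply Hab in Hh. lra. unfold Rabs; destruct (Rcase_abs (INR k' - INR m * p)); lra. }
   destruct (classic (INR m * p - s <= INR k' <= INR m * p - s + 2 * s)) as [Hh|Hh].
   - rewrite indic_true by auto. rewrite !Rmult_1_r. assert (Hw : Rabs (INR k' - INR m * p) <= s) by (unfold Rabs; destruct (Rcase_abs (INR k' - INR m * p)); lra).
     pose proof (Hcmp k' ltac:(lia) Hw). replace (pmf m p k') with (K * (exp (- X) * pmf m p k')) by (rewrite <- Rmult_assoc, (Rmult_comm K), HK; ring).
     apply Rmult_le_compat_l; lra.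
   - rewrite indic_false by auto. rewrite !Rmult_0_r. lra. }
 pose proof (count_window (S m) (INR m * p - s) (2 * s)) as Hcnt. rewrite Rmax_right in Hcnt by lra.
 pose proof (pmf_nonneg m p k ltac:(lra)).
 assert (3 / 4 <= K * pmf m p k * (3 * s)).
 { assert (K * pmf m p k * rsum (seq 0 (S m)) (fun k' => indic (INR m * p - s <= INR k' <= INR m * p - s + 2 * s)) <= K * pmf m p k * (3 * s)).
   { apply Rmult_le_compat_l. apply Rmult_le_pos; lra. lra. } lra. }
 replace (-2 * B * (A + 1)) with (- X) by (unfold X; ring). unfold Rdiv. apply (Rmult_le_reg_r (4 * s)); [lra|].
 replace (exp (- X) * / 4 * / s * (4 * s)) with (exp (- X)) by (field; lra).
 replace (pmf m p k * (4 * s)) with ((exp (- X) * K) * (pmf m p k * (4 * s))) by (rewrite HK; ring).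
 assert (0 < exp (- X)) by apply exp_pos. assert (1 <= K * pmf m p k * (4 * s)) by lra.
 replace (exp (- X) * K * (pmf m p k * (4 * s))) with (exp (- X) * (K * pmf m p k * (4 * s))) by ring.
 assert (HH : exp (- X) * 1 <= exp (- X) * (K * pmf m p k * (4 * s))) by (apply Rmult_le_compat_l; lra). lra. Qed.

Lemma sum_indic_single (l : list nat) K f U : NoDup l -> 0 <= U -> (forall k, In k l -> 0 <= f k <= U) ->
  rsum l (fun k => indic (INR k = K) * f k) <= U.
Proof. induction l as [|a l IH]; intros Hn HU Hf.
 - rewrite rsum_nil. auto.
 - inversion Hn; subst. rewrite rsum_cons. destruct (classic (INR a = K)) as [Ha|Ha].
   + rewrite indic_true by auto. rewrite (rsum_ext _ _ (fun _ => 0)). rewrite rsum_zero. specialize (Hf a (or_introl eq_refl)). lra.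
     intros k Hk. rewrite indic_false. ring. intros E. rewrite <- Ha in E. apply INR_eq in E. subst. auto.
   + rewrite indic_false by auto. rewrite Rmult_0_l, Rplus_0_l. apply IH; auto. intros; apply Hf; right; auto. Qed.

Lemma length_Sst d : (1 <= d)%nat -> length (Sst d) = (d - 1)%nat.
Proof. intros Hd. assert (P : Permutation (Sst d) (map (fun r => (r, 0%nat)) (seq 1 (d - 1)))).
 { apply NoDup_Permutation. apply Sst_NoDup. apply FinFun.Injective_map_NoDup. intros a b E; inversion E; auto. apply seq_NoDup.
   intros [r s]. rewrite Sst_In, in_map_iff. simpl. split.
   - intros [H1 ->]. exists r. split; auto. rewrite in_seq. lia.
   - intros [x [E Hx]]. inversion E; subst. rewrite in_seq in Hx. lia. }
 rewrite (Permutation_length P), length_map, length_seq. reflexivity. Qed.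

Definition Pbal d mu (y : nat -> nat -> R) :=
  rsum (boxes (offdiag d) mu) (fun w => indic (balanced d w) *
    rprod (offdiag d) (fun e => pmf (mu (fst e) (snd e)) (y (fst e) (snd e)) (w (fst e) (snd e)))).

Lemma Iter_pmf_one d mu y : (forall e, In e (offdiag d) -> 0 <= y (fst e) (snd e) <= 1) ->
  Iter mu (Oth d) (fun w => rprod (Oth d) (fun e => pmf (mu (fst e) (snd e)) (y (fst e) (snd e)) (w (fst e) (snd e)))) (fun _ _ => 0%nat) = 1.
Proof. intros Hy.
 rewrite (Iter_ext _ _ _ (fun w => (fun _ => 1) w * rprod (Oth d) (fun e => (fun _ e k => pmf (mu (fst e) (snd e)) (y (fst e) (snd e)) k) w e (w (fst e) (snd e))))) by (intros; ring).
 rewrite (Iter_prod mu (Oth d) (fun _ => 1) (fun _ e k => pmf (mu (fst e) (snd e)) (y (fst e) (snd e)) k)); auto.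
 - rewrite Rmult_1_l. rewrite (rprod_ext _ _ (fun _ => 1)). rewrite rprod_const, pow1. reflexivity.
   intros e He. apply pmf_sum.
 - apply Oth_NoDup. Qed.

Theorem Pbal_upper d mu y U : (1 <= d)%nat -> 0 <= U ->
  (forall e, In e (offdiag d) -> 0 <= y (fst e) (snd e) <= 1) ->
  (forall e k, In e (offdiag d) -> (k <= mu (fst e) (snd e))%nat -> pmf (mu (fst e) (snd e)) (y (fst e) (snd e)) k <= U) ->
  Pbal d mu y <= U ^ (d - 1).
Proof. intros Hd HU Hy Hb. unfold Pbal. rewrite (star_decomp d mu (fun e k => pmf (mu (fst e) (snd e)) (y (fst e) (snd e)) k)) by auto.
 rewrite <- (Rmult_1_r (U ^ (d - 1))). rewrite <- (Iter_pmf_one d mu y Hy). rewrite <- Iter_scal.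
 apply Iter_le. intros w. rewrite Rmult_comm. apply Rmult_le_compat_r.
 - apply rprod_nonneg. intros e He. apply pmf_nonneg. apply Hy. apply Oth_In in He; tauto.
 - rewrite <- (length_Sst d Hd). rewrite <- rprod_const. apply rprod_le. intros e He.
   assert (He' : In e (offdiag d)) by (unfold Sst in He; apply filter_In in He; tauto).
   split.
   + apply rsum_nonneg. intros k _. apply Rmult_le_pos. apply indic_01. apply pmf_nonneg; auto.
   + apply sum_indic_single; auto. unfold rng; apply seq_NoDup. intros k Hk. unfold rng in Hk. rewrite in_seq in Hk.
     split. apply pmf_nonneg; auto. apply Hb; auto. lia. Qed.

Lemma split0 d r (g : nat -> R) : (1 <= r < d)%nat ->
  rsum (offs d r) g = g 0%nat + rsum (offs d r) (fun s => if Nat.eqb s 0 then 0 else g s).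
Proof. intros Hr. rewrite <- (rsum_pick (offs d r) 0 g).
 - rewrite <- rsum_plus. apply rsum_ext. intros s _. destruct (Nat.eqb s 0); ring.
 - apply offs_NoDup.
 - apply offs_In. lia. Qed.

Lemma length_offs d r : (length (offs d r) <= d)%nat.
Proof. unfold offs. eapply Nat.le_trans; [apply filter_length_le|]. rewrite length_seq. lia. Qed.

Lemma Kf_int d w r : exists a b : nat, Kf d w r = INR a - INR b.
Proof. unfold Kf. destruct (Nat.eqb r 0). exists 0%nat, 0%nat. simpl; ring.
 rewrite rsum_INR. rewrite (rsum_ext _ _ (fun s => INR (if Nat.eqb s 0 then 0%nat else w r s))).
 rewrite rsum_INR. eexists; eexists; reflexivity. intros s _. destruct (Nat.eqb s 0); reflexivity. Qed.

Theorem Pbal_lower d mu y t L : (1 <= d)%nat -> 0 < t -> 0 <= L ->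
  (forall e, In e (offdiag d) -> 0 <= y (fst e) (snd e) <= 1) ->
  (forall r, (r < d)%nat -> rsum (offs d r) (fun s => INR (mu r s) * y r s) = rsum (offs d r) (fun s => INR (mu s r) * y s r)) ->
  (forall e, In e (offdiag d) -> INR (mu (fst e) (snd e)) * y (fst e) (snd e) * (1 - y (fst e) (snd e)) <= t ^ 2 / 4) ->
  (forall e x, In e (Sst d) -> Rabs (x - INR (mu (fst e) (snd e)) * y (fst e) (snd e)) <= 2 * INR d * t -> 0 <= x) ->
  (forall e k, In e (Sst d) -> Rabs (INR k - INR (mu (fst e) (snd e)) * y (fst e) (snd e)) <= 2 * INR d * t ->
     (k <= mu (fst e) (snd e))%nat /\ L <= pmf (mu (fst e) (snd e)) (y (fst e) (snd e)) k) ->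
  L ^ (d - 1) * (3 / 4) ^ (length (Oth d)) <= Pbal d mu y.
Proof. intros Hd Ht HL Hy Hbal Hvar HK HQ. unfold Pbal.
 rewrite (star_decomp d mu (fun e k => pmf (mu (fst e) (snd e)) (y (fst e) (snd e)) k)) by auto.
 set (good := fun (w : nat -> nat -> nat) => forall e, In e (Oth d) -> Rabs (INR (w (fst e) (snd e)) - INR (mu (fst e) (snd e)) * y (fst e) (snd e)) <= t).
 assert (Hyo : forall e, In e (Oth d) -> 0 <= y (fst e) (snd e) <= 1) by (intros e He; apply Hy; apply Oth_In in He; tauto).
 eapply Rle_trans; [|apply (Iter_le _ _ (fun w => L ^ (d - 1) * (1 * rprod (Oth d) (fun e =>
     (fun _ e k => pmf (mu (fst e) (snd e)) (y (fst e) (snd e)) k * indic (Rabs (INR k - INR (mu (fst e) (snd e)) * y (fst e) (snd e)) <= t)) w e (w (fst e) (snd e))))))].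
 - rewrite Iter_scal. rewrite (Iter_prod mu (Oth d) (fun _ => 1) (fun _ e k => pmf (mu (fst e) (snd e)) (y (fst e) (snd e)) k * indic (Rabs (INR k - INR (mu (fst e) (snd e)) * y (fst e) (snd e)) <= t))); auto.
   2: apply Oth_NoDup.
   rewrite Rmult_1_l. apply Rmult_le_compat_l. apply pow_le; auto. rewrite <- rprod_const. apply rprod_le. intros e He.
   assert (He' : In e (offdiag d)) by (apply Oth_In in He; tauto). split. lra.
   pose proof (pmf_cheb (mu (fst e) (snd e)) (y (fst e) (snd e)) t (Hy e He') Ht) as Hc.
   assert (Hs : rsum (rng mu e) (fun k => pmf (mu (fst e) (snd e)) (y (fst e) (snd e)) k * indic (Rabs (INR k - INR (mu (fst e) (snd e)) * y (fst e) (snd e)) <= t)) =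
     1 - rsum (seq 0 (S (mu (fst e) (snd e)))) (fun k => pmf (mu (fst e) (snd e)) (y (fst e) (snd e)) k * indic (t < Rabs (INR k - INR (mu (fst e) (snd e)) * y (fst e) (snd e))))).
   { rewrite <- (pmf_sum (mu (fst e) (snd e)) (y (fst e) (snd e))), <- rsum_minus. unfold rng. apply rsum_ext. intros k _.
     destruct (Rle_lt_dec (Rabs (INR k - INR (mu (fst e) (snd e)) * y (fst e) (snd e))) t).
     - rewrite indic_true, indic_false by lra. ring.
     - rewrite indic_false, indic_true by lra. ring. }
   rewrite Hs. specialize (Hvar e He'). assert (0 < t ^ 2) by (apply pow_lt; lra).
   assert (INR (mu (fst e) (snd e)) * y (fst e) (snd e) * (1 - y (fst e) (snd e)) / t ^ 2 <= 1 / 4).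
   { unfold Rdiv. apply (Rmult_le_reg_r (t ^ 2)); auto. rewrite Rmult_assoc, Rinv_l by lra. lra. } lra.
 - intros w. cbv beta. rewrite Rmult_1_l. rewrite rprod_mult. rewrite <- (indic_forall (Oth d) (fun e => Rabs (INR (w (fst e) (snd e)) - INR (mu (fst e) (snd e)) * y (fst e) (snd e)) <= t)).
   assert (HP : 0 <= rprod (Oth d) (fun e => pmf (mu (fst e) (snd e)) (y (fst e) (snd e)) (w (fst e) (snd e)))).
   { apply rprod_nonneg. intros e He. apply pmf_nonneg; auto. }
   assert (HQ0 : 0 <= rprod (Sst d) (fun e => rsum (rng mu e) (fun k => indic (INR k = Kf d w (fst e)) * pmf (mu (fst e) (snd e)) (y (fst e) (snd e)) k))).
   { apply rprod_nonneg. intros e He. apply rsum_nonneg. intros k _. apply Rmult_le_pos. apply indic_01. apply pmf_nonneg.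
     apply Hy. unfold Sst in He; apply filter_In in He; tauto. }
   destruct (classic (good w)) as [Hg|Hg].
   + rewrite indic_true by exact Hg. rewrite Rmult_1_r. rewrite Rmult_comm. apply Rmult_le_compat_l; auto.
     rewrite <- (length_Sst d Hd), <- rprod_const. apply rprod_le. intros [r s0] He. split; auto.
     pose proof He as He2. apply Sst_In in He2. simpl in He2. destruct He2 as [Hr ->]. simpl fst; simpl snd.
     assert (Hdev : Rabs (Kf d w r - INR (mu r 0%nat) * y r 0%nat) <= 2 * INR d * t).
     { unfold Kf. destruct (Nat.eqb_spec r 0); [lia|].
       assert (Hrd : (r < d)%nat) by lia. pose proof (Hbal r Hrd) as Hb.
       rewrite (split0 d r (fun s => INR (mu r s) * y r s)) in Hb by lia. cbv beta in Hb.
       replace (rsum (offs d r) (fun s => INR (w s r)) - rsum (offs d r) (fun s => if Nat.eqb s 0 then 0 else INR (w r s)) - INR (mu r 0%nat) * y r 0%nat)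
         with (rsum (offs d r) (fun s => INR (w s r) - INR (mu s r) * y s r) - rsum (offs d r) (fun s => if Nat.eqb s 0 then 0 else INR (w r s) - INR (mu r s) * y r s)).
       2:{ rewrite !rsum_minus. rewrite (rsum_ext _ (fun s => if Nat.eqb s 0 then 0 else INR (w r s) - INR (mu r s) * y r s)
             (fun s => (if Nat.eqb s 0 then 0 else INR (w r s)) - (if Nat.eqb s 0 then 0 else INR (mu r s) * y r s))).
           rewrite rsum_minus. lra. intros s _. destruct (Nat.eqb s 0); ring. }
       assert (Hl : INR (length (offs d r)) <= INR d) by (apply le_INR, length_offs).
       assert (B1 : Rabs (rsum (offs d r) (fun s => INR (w s r) - INR (mu s r) * y s r)) <= INR (length (offs d r)) * t).
       { apply rsum_bound. intros s Hs. apply offs_In in Hs. apply (Hg (s, r)). apply Oth_In. split. apply offdiag_In; lia. simpl; lia. }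
       assert (B2 : Rabs (rsum (offs d r) (fun s => if Nat.eqb s 0 then 0 else INR (w r s) - INR (mu r s) * y r s)) <= INR (length (offs d r)) * t).
       { apply rsum_bound. intros s Hs. apply offs_In in Hs. destruct (Nat.eqb_spec s 0). rewrite Rabs_R0; lra.
         apply (Hg (r, s)). apply Oth_In. split. apply offdiag_In; lia. simpl; lia. }
       eapply Rle_trans; [apply Rabs_triang|]. rewrite Rabs_Ropp. assert (INR (length (offs d r)) * t <= INR d * t) by (apply Rmult_le_compat_r; lra). lra. }
     pose proof (HK (r, 0%nat) _ He Hdev) as HK0. simpl in HK0.
     destruct (Kf_int d w r) as [a [b Hab]]. rewrite Hab in HK0, Hdev.
     assert (Hba : (b <= a)%nat). { apply INR_le. lra. }
     rewrite <- minus_INR in Hdev by auto. destruct (HQ (r, 0%nat) (a - b)%nat He Hdev) as [Hkm HLk]. simpl in Hkm, HLk.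
     eapply Rle_trans; [exact HLk|].
     eapply Rle_trans; [|apply (rsum_single _ _ (a - b)%nat)].
     * cbv beta. rewrite indic_true. lra. rewrite Hab, minus_INR by auto. reflexivity.
     * unfold rng. rewrite in_seq. simpl. lia.
     * intros k _. apply Rmult_le_pos. apply indic_01. apply pmf_nonneg. apply (Hy (r, 0%nat)). unfold Sst in He; apply filter_In in He; tauto.
   + rewrite indic_false by exact Hg. rewrite Rmult_0_r, Rmult_0_r. apply Rmult_le_pos; auto.
Qed.

Lemma ln_le x y : 0 < x -> x <= y -> ln x <= ln y.
Proof. intros Hx H. destruct (Rle_lt_or_eq_dec _ _ H). apply Rlt_le, ln_increasing; auto. subst; lra. Qed.
Lemma ln_div x y : 0 < x -> 0 < y -> ln (x / y) = ln x - ln y.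
Proof. intros. unfold Rdiv. rewrite ln_mult, ln_Rinv; auto. apply Rinv_0_lt_compat; auto. Qed.
Lemma ln_le_sub1 z : 0 < z -> ln z <= z - 1.
Proof. intros Hz. pose proof (exp_ineq1_le (ln z)). rewrite exp_ln in H; auto. lra. Qed.

Section Phi.
Variable al : R.
Hypothesis Hal : 0 < al < 1.

Definition Zf t := 1 - al + al * exp t.
Definition phi t := ln (Zf t).
Definition psi t := al * exp t / Zf t.

Lemma Zf_pos t : 0 < Zf t.
Proof. unfold Zf. pose proof (exp_pos t). nra. Qed.

Lemma psi_bounds t : 0 < psi t < 1.
Proof. unfold psi. pose proof (Zf_pos t). pose proof (exp_pos t). split.
 - apply Rdiv_lt_0_compat; nra.
 - apply (Rmult_lt_reg_r (Zf t)); auto. unfold Rdiv. rewrite Rmult_assoc, Rinv_l by lra. unfold Zf. lra. Qed.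

Lemma phi_lb1 t : ln (1 - al) <= phi t.
Proof. unfold phi. apply ln_le. lra. unfold Zf. pose proof (exp_pos t). nra. Qed.

Lemma phi_lb2 t : ln al + t <= phi t.
Proof. unfold phi. replace (ln al + t) with (ln (al * exp t)) by (rewrite ln_mult, ln_exp; [reflexivity|lra|apply exp_pos]).
 apply ln_le. pose proof (exp_pos t). nra. unfold Zf. lra. Qed.

Lemma phi_0 : phi 0 = 0.
Proof. unfold phi, Zf. rewrite exp_0. replace (1 - al + al * 1) with 1 by ring. apply ln_1. Qed.

Lemma phi_lip t t' : Rabs (phi t - phi t') <= Rabs (t - t').
Proof. assert (K : forall a b, a <= b -> 0 <= phi b - phi a <= b - a).
 { intros a b Hab. unfold phi. pose proof (Zf_pos a). pose proof (exp_pos a). pose proof (exp_pos b).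
   assert (exp a <= exp b) by (apply exp_le_exp; auto).
   split. assert (ln (Zf a) <= ln (Zf b)) by (apply ln_le; auto; unfold Zf; nra). lra.
   assert (Zf b <= exp (b - a) * Zf a).
   { unfold Zf. replace b with ((b - a) + a) at 1 by ring. rewrite exp_plus.
     assert (1 <= exp (b - a)) by (pose proof (exp_ineq1_le (b - a)); lra). nra. }
   assert (ln (Zf b) <= ln (exp (b - a) * Zf a)) by (apply ln_le; auto; apply Zf_pos).
   rewrite ln_mult, ln_exp in H4 by (auto; apply exp_pos). lra. }
 destruct (Rle_dec t t').
 - specialize (K t t' r). rewrite Rabs_minus_sym, (Rabs_minus_sym t). rewrite !Rabs_right by lra. lra.
 - specialize (K t' t ltac:(lra)). rewrite !Rabs_right by lra. lra. Qed.

Lemma psi_mono t t' : t <= t' -> psi t <= psi t'.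
Proof. intros H. assert (E : forall u, psi u = 1 - (1 - al) / Zf u).
 { intros u. unfold psi. pose proof (Zf_pos u). unfold Zf in *. field. lra. }
 rewrite !E. pose proof (Zf_pos t). pose proof (Zf_pos t'). assert (Zf t <= Zf t').
 { unfold Zf. assert (exp t <= exp t') by (apply exp_le_exp; auto). nra. }
 assert ((1 - al) / Zf t' <= (1 - al) / Zf t). { unfold Rdiv. apply Rmult_le_compat_l. lra. apply Rinv_le_contravar; auto. }
 lra. Qed.

Lemma phi_deriv a c : derivable_pt_lim (fun h => phi (a + c * h)) 0 (c * psi a).
Proof.
 assert (E : (fun h => phi (a + c * h)) = comp ln (fun h => 1 - al + al * exp (a + c * h))) by reflexivity.
 rewrite E. replace (c * psi a) with (/ (1 - al + al * exp (a + c * 0)) * (al * (exp (a + c * 0) * c))).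
 2:{ rewrite Rmult_0_r, Rplus_0_r. unfold psi, Zf. field. pose proof (Zf_pos a). unfold Zf in H. lra. }
 apply derivable_pt_lim_comp.
 - assert (E2 : (fun h => 1 - al + al * exp (a + c * h)) = plus_fct (fct_cte (1 - al)) (mult_real_fct al (comp exp (fun h => a + c * h)))) by reflexivity.
   rewrite E2. replace (al * (exp (a + c * 0) * c)) with (0 + al * (exp (a + c * 0) * c)) by ring.
   apply derivable_pt_lim_plus. apply derivable_pt_lim_const. apply derivable_pt_lim_scal.
   apply derivable_pt_lim_comp. 2: apply derivable_pt_lim_exp.
   assert (E3 : (fun h => a + c * h) = plus_fct (fct_cte a) (mult_real_fct c id)) by reflexivity.
   rewrite E3. assert (D : derivable_pt_lim (fct_cte a + mult_real_fct c id)%F 0 (0 + c * 1)) by (apply derivable_pt_lim_plus; [apply derivable_pt_lim_const| apply derivable_pt_lim_scal, derivable_pt_lim_id]).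
   replace (0 + c * 1) with c in D by ring. exact D.
 - apply derivable_pt_lim_ln. pose proof (Zf_pos (a + c * 0)). unfold Zf in H. lra. Qed.

Lemma ln_psi_al t : ln (psi t / al) = t - phi t.
Proof. unfold psi, phi. pose proof (Zf_pos t). replace (al * exp t / Zf t / al) with (exp t / Zf t) by (field; lra).
 rewrite ln_div by (auto; apply exp_pos). rewrite ln_exp. ring. Qed.
Lemma ln_1psi t : ln ((1 - psi t) / (1 - al)) = - phi t.
Proof. unfold psi, phi. pose proof (Zf_pos t). replace ((1 - al * exp t / Zf t) / (1 - al)) with (/ Zf t).
 apply ln_Rinv; auto. unfold Zf in *. field. lra. Qed.

Lemma KL_psi t : KL (psi t) al = psi t * t - phi t.
Proof. unfold KL. rewrite ln_psi_al, ln_1psi. ring. Qed.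

Lemma Gibbs x t : 0 <= x <= 1 -> x * t - phi t <= KL x al.
Proof. intros Hx. pose proof (psi_bounds t) as Hy. set (y := psi t) in *.
 assert (R1 : x * t - phi t = x * ln (y / al) + (1 - x) * ln ((1 - y) / (1 - al))) by (unfold y; rewrite ln_psi_al, ln_1psi; ring).
 rewrite R1. unfold KL.
 assert (A1 : x * ln (y / al) + (x - y) <= x * ln (x / al)).
 { destruct (Rle_lt_or_eq_dec 0 x) as [Hx0|Hx0]; [lra| |].
   - rewrite !ln_div by lra. assert (ln (y / x) <= y / x - 1) by (apply ln_le_sub1; apply Rdiv_lt_0_compat; lra).
     rewrite ln_div in H by lra. assert (x * (ln y - ln x) <= x * (y / x - 1)) by (apply Rmult_le_compat_l; lra).
     replace (x * (y / x - 1)) with (y - x) in H0 by (field; lra). nra.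
   - subst. lra. }
 assert (A2 : (1 - x) * ln ((1 - y) / (1 - al)) + ((1 - x) - (1 - y)) <= (1 - x) * ln ((1 - x) / (1 - al))).
 { destruct (Rle_lt_or_eq_dec 0 (1 - x)) as [Hx0|Hx0]; [lra| |].
   - rewrite !ln_div by lra. assert (ln ((1 - y) / (1 - x)) <= (1 - y) / (1 - x) - 1) by (apply ln_le_sub1; apply Rdiv_lt_0_compat; lra).
     rewrite ln_div in H by lra. assert ((1 - x) * (ln (1 - y) - ln (1 - x)) <= (1 - x) * ((1 - y) / (1 - x) - 1)) by (apply Rmult_le_compat_l; lra).
     replace ((1 - x) * ((1 - y) / (1 - x) - 1)) with ((1 - y) - (1 - x)) in H0 by (field; lra). nra.
   - rewrite <- Hx0. lra. }
 lra. Qed.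

Lemma tilt m k t : (k <= m)%nat ->
  C m k * al ^ k * (1 - al) ^ (m - k) = pmf m (psi t) k * exp (INR m * phi t) * exp (- (INR k * t)).
Proof. intros Hk. unfold pmf. pose proof (Zf_pos t) as HZ.
 assert (E1 : al = psi t * Zf t * exp (- t)). { unfold psi. rewrite exp_Ropp. field. split; [apply Rgt_not_eq, exp_pos|lra]. }
 assert (E2 : 1 - al = (1 - psi t) * Zf t). { unfold psi, Zf in *. field. lra. }
 assert (E3 : exp (INR m * phi t) = Zf t ^ k * Zf t ^ (m - k)).
 { rewrite <- pow_add. replace (k + (m - k))%nat with m by lia. rewrite <- exp_pow_n. unfold phi. rewrite exp_ln; auto. }
 assert (E4 : exp (- (INR k * t)) = exp (- t) ^ k). { rewrite exp_pow_n. f_equal; ring. }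
 rewrite E3, E4. rewrite E1 at 1. rewrite E2. rewrite !Rpow_mult_distr. ring. Qed.

End Phi.

Lemma lip_cont (f : R -> R) L x : 0 <= L -> (forall c c', Rabs (f c - f c') <= L * Rabs (c - c')) -> continuity_pt f x.
Proof. intros HL H. unfold continuity_pt, continue_in, limit1_in, limit_in. intros eps Heps.
 exists (eps / (L + 1)). split. apply Rdiv_lt_0_compat; lra. intros x' [_ Hd]. simpl in *. unfold R_dist in *.
 eapply Rle_lt_trans. apply H. assert (eps / (L + 1) * L < eps).
 { apply (Rmult_lt_reg_r (L + 1)); [lra|]. replace (eps / (L + 1) * L * (L + 1)) with (eps * L) by (field; lra). nra. }
 assert (L * Rabs (x' - x) <= L * (eps / (L + 1))) by (apply Rmult_le_compat_l; lra). lra. Qed.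

Definition updR (l : nat -> R) i c : nat -> R := fun j => if Nat.eqb j i then c else l j.

Lemma updR_same l i c : updR l i c i = c. Proof. unfold updR. rewrite Nat.eqb_refl. auto. Qed.
Lemma updR_other l i c j : j <> i -> updR l i c j = l j. Proof. intros H. unfold updR. destruct (Nat.eqb_spec j i); tauto. Qed.
Lemma updR_id l i : updR l i (l i) = l.
Proof. apply functional_extensionality. intros j. unfold updR. destruct (Nat.eqb_spec j i); subst; auto. Qed.
Lemma updR_updR l i c c' : updR (updR l i c) i c' = updR l i c'.
Proof. apply functional_extensionality. intros j. unfold updR. destruct (Nat.eqb_spec j i); auto. Qed.

Lemma evt_coords (F : (nat -> R) -> R) (L a b : R) (I : list nat) : NoDup I -> a <= b -> 0 <= L ->
  (forall l i c c', In i I -> Rabs (F (updR l i c) - F (updR l i c')) <= L * Rabs (c - c')) ->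
  forall l0, exists ls, (forall i, ~ In i I -> ls i = l0 i) /\ (forall i, In i I -> a <= ls i <= b) /\
   forall l, (forall i, ~ In i I -> l i = l0 i) -> (forall i, In i I -> a <= l i <= b) -> F ls <= F l.
Proof. intros HI Hab HL. induction I as [|i I IH]; intros HF l0.
 - exists l0. split; [auto|]. split; [intros i []|]. intros l Hl _. replace l with l0; [lra|].
   apply functional_extensionality; intros j; symmetry; apply Hl; auto.
 - inversion HI as [|? ? Hni HnI]; subst. assert (HF' : forall l i0 c c', In i0 I -> Rabs (F (updR l i0 c) - F (updR l i0 c')) <= L * Rabs (c - c'))
     by (intros; apply HF; right; auto).
   pose (lam := fun c => proj1_sig (constructive_indefinite_description _ (IH HnI HF' (updR l0 i c)))).
   assert (Hlam : forall c, (forall j, ~ In j I -> lam c j = updR l0 i c j) /\ (forall j, In j I -> a <= lam c j <= b) /\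
      forall l, (forall j, ~ In j I -> l j = updR l0 i c j) -> (forall j, In j I -> a <= l j <= b) -> F (lam c) <= F l).
   { intros c. unfold lam. destruct (constructive_indefinite_description _ _) as [x Hx]. exact Hx. }
   set (Hf := fun c => F (lam c)).
   assert (Hli : forall c, lam c i = c). { intros c. destruct (Hlam c) as [H1 _]. rewrite H1 by auto. apply updR_same. }
   assert (Hlip1 : forall c c', Hf c <= Hf c' + L * Rabs (c - c')).
   { intros c c'. unfold Hf. destruct (Hlam c) as [_ [_ H3]]. destruct (Hlam c') as [H1' [H2' _]].
     assert (F (lam c) <= F (updR (lam c') i c)).
     { apply H3.
       - intros j Hj. destruct (Nat.eq_dec j i) as [->|Hne]. rewrite !updR_same; auto.
         rewrite !updR_other by auto. rewrite H1' by auto. rewrite updR_other; auto.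
       - intros j Hj. rewrite updR_other. apply H2'; auto. intros ->; auto. }
     pose proof (HF (lam c') i c c' (or_introl eq_refl)). assert (E : updR (lam c') i c' = lam c').
     { apply functional_extensionality; intros j; unfold updR; destruct (Nat.eqb_spec j i); subst; auto. }
     rewrite E in H0.
     pose proof (Rle_abs (F (updR (lam c') i c) - F (lam c'))). lra. }
   assert (Hcont : forall x, continuity_pt Hf x).
   { intros x. apply (lip_cont _ L); auto. intros c c'. pose proof (Hlip1 c c'). pose proof (Hlip1 c' c).
     rewrite (Rabs_minus_sym c' c) in H0. unfold Rabs at 1. destruct (Rcase_abs (Hf c - Hf c')); lra. }
   destruct (continuity_ab_min Hf a b Hab (fun c _ => Hcont c)) as [cs [Hcs1 Hcs2]].
   exists (lam cs). destruct (Hlam cs) as [H1 [H2 H3']]. split; [|split].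
   + intros j Hj. rewrite H1. rewrite updR_other; auto. intros ->; apply Hj; left; auto. intros Hj'; apply Hj; right; auto.
   + intros j [<-|Hj]. rewrite Hli; auto. apply H2; auto.
   + intros l Hl Hb. set (c := l i). assert (Hc : a <= c <= b) by (apply Hb; left; auto).
     apply (Rle_trans _ (Hf c)). apply Hcs1; auto.
     destruct (Hlam c) as [_ [_ H3c]]. apply H3c.
     * intros j Hj. destruct (Nat.eq_dec j i) as [->|Hne]. rewrite updR_same. reflexivity.
       rewrite updR_other by auto. apply Hl. intros [E|E]; auto.
     * intros j Hj. apply Hb; right; auto. Qed.

Section Lam.
Variable d : nat.
Variable al : R.
Hypothesis Hal : 0 < al < 1.
Variable mu : nat -> nat -> nat.

Definition Lam (l : nat -> R) := rsum (offdiag d) (fun e => INR (mu (fst e) (snd e)) * phi al (l (fst e) - l (snd e))).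
Definition Msum := rsum (offdiag d) (fun e => INR (mu (fst e) (snd e))).

Lemma Msum_nonneg : 0 <= Msum. Proof. apply rsum_nonneg; intros; apply pos_INR. Qed.

Lemma Lam_lip l i c c' : Rabs (Lam (updR l i c) - Lam (updR l i c')) <= Msum * Rabs (c - c').
Proof. unfold Lam, Msum. rewrite <- rsum_minus. eapply Rle_trans; [apply rsum_abs|]. rewrite <- rsum_scalr. apply rsum_le.
 intros [r s] _. simpl. rewrite <- Rmult_minus_distr_l. rewrite Rabs_mult, Rabs_right by (apply Rle_ge, pos_INR).
 apply Rmult_le_compat_l. apply pos_INR. eapply Rle_trans; [apply phi_lip; auto|].
 unfold updR. destruct (Nat.eqb_spec r i), (Nat.eqb_spec s i).
 - replace (c - c - (c' - c')) with 0 by ring. rewrite Rabs_R0. apply Rabs_pos.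
 - replace (c - l s - (c' - l s)) with (c - c') by ring. lra.
 - replace (l r - c - (l r - c')) with (- (c - c')) by ring. rewrite Rabs_Ropp. lra.
 - replace (l r - l s - (l r - l s)) with 0 by ring. rewrite Rabs_R0. apply Rabs_pos. Qed.

Lemma Lam_zero : Lam (fun _ => 0) = 0.
Proof. unfold Lam. rewrite (rsum_ext _ _ (fun _ => 0)). apply rsum_zero. intros. rewrite Rminus_0_r, phi_0; auto. ring. Qed.

Definition c0 := - ln (1 - al).
Definition kd := INR (length (offdiag d)).

Lemma c0_pos : 0 < c0.
Proof. unfold c0. assert (ln (1 - al) < ln 1) by (apply ln_increasing; lra). rewrite ln_1 in H. lra. Qed.

Lemma Lam_bound eps n l : 0 < eps -> 0 < n ->
  (forall e, In e (offdiag d) -> eps * n <= INR (mu (fst e) (snd e)) <= n) ->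
  Lam l <= 0 -> forall e, In e (offdiag d) -> l (fst e) - l (snd e) <= c0 * kd / eps - c0 - ln al.
Proof. intros He Hn Hmu HL e0 He0. set (t := l (fst e0) - l (snd e0)).
 assert (Hsum : rsum (offdiag d) (fun e => INR (mu (fst e) (snd e)) * (phi al (l (fst e) - l (snd e)) + c0)) <= c0 * kd * n).
 { rewrite (rsum_ext _ _ (fun e => INR (mu (fst e) (snd e)) * phi al (l (fst e) - l (snd e)) + c0 * INR (mu (fst e) (snd e)))) by (intros; ring).
   rewrite rsum_plus, rsum_scal. fold (Lam l). assert (rsum (offdiag d) (fun e => INR (mu (fst e) (snd e))) <= kd * n).
   { unfold kd. rewrite <- rsum_const. apply rsum_le. intros e He'. apply Hmu; auto. }
   pose proof c0_pos. nra. }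
 assert (Hpos : forall e, In e (offdiag d) -> 0 <= INR (mu (fst e) (snd e)) * (phi al (l (fst e) - l (snd e)) + c0)).
 { intros e _. apply Rmult_le_pos. apply pos_INR. pose proof (phi_lb1 al Hal (l (fst e) - l (snd e))). unfold c0. lra. }
 pose proof (rsum_single _ _ e0 He0 Hpos) as H1. cbv beta in H1. fold t in H1.
 pose proof (phi_lb2 al Hal t) as H2. pose proof (Hmu e0 He0) as H3. pose proof c0_pos as H4.
 assert (Hk : 0 <= kd) by apply pos_INR.
 destruct (Rle_dec 0 (ln al + t + c0)) as [Hp|Hp].
 - assert (eps * n * (ln al + t + c0) <= c0 * kd * n).
   { eapply Rle_trans; [|exact Hsum]. eapply Rle_trans; [|exact H1]. apply Rmult_le_compat; try lra. nra. }
   assert (ln al + t + c0 <= c0 * kd / eps).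
   { apply (Rmult_le_reg_l (eps * n)). nra. replace (eps * n * (c0 * kd / eps)) with (c0 * kd * n) by (field; lra). lra. }
   lra.
 - assert (0 <= c0 * kd / eps) by (apply Rle_mult_inv_pos; nra). lra. Qed.

Lemma Lam_ext l l' : (forall r s, (r < d)%nat -> (s < d)%nat -> l r - l s = l' r - l' s) -> Lam l = Lam l'.
Proof. intros H. unfold Lam. apply rsum_ext. intros [r s] Hrs. apply offdiag_In in Hrs. simpl. rewrite H by lia. reflexivity. Qed.

Definition T0 eps := c0 * kd / eps - c0 - ln al.

Lemma Lam_min eps n : (1 <= d)%nat -> 0 < eps -> 0 < n ->
  (forall e, In e (offdiag d) -> eps * n <= INR (mu (fst e) (snd e)) <= n) ->
  exists ls, (forall l, Lam ls <= Lam l) /\ Lam ls <= 0.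
Proof. intros Hd He Hn Hmu. set (b := Rabs (T0 eps) + 1).
 assert (Hb : 0 <= b) by (unfold b; pose proof (Rabs_pos (T0 eps)); lra).
 destruct (evt_coords Lam Msum (- b) b (seq 1 (d - 1)) (seq_NoDup _ _) ltac:(lra) Msum_nonneg
   (fun l i c c' _ => Lam_lip l i c c') (fun _ => 0)) as [ls [H1 [H2 H3]]].
 assert (Hadm0 : Lam ls <= Lam (fun _ => 0)). { apply H3; auto. intros; lra. }
 rewrite Lam_zero in Hadm0.
 exists ls. split; auto. intros l.
 set (l' := fun j => if Nat.ltb j d then l j - l 0%nat else 0).
 assert (E : Lam l = Lam l'). { apply Lam_ext. intros r s Hr Hs. unfold l'. apply Nat.ltb_lt in Hr, Hs. rewrite Hr, Hs. ring. }
 rewrite E. destruct (Rle_dec (Lam l') 0) as [Hl|Hl]; [|lra].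
 apply H3.
 - intros i Hi. rewrite in_seq in Hi. unfold l'. destruct (Nat.ltb_spec i d); auto. replace i with 0%nat by lia. ring.
 - intros i Hi. rewrite in_seq in Hi.
   pose proof (Lam_bound eps n l' He Hn Hmu Hl (i, 0%nat) ltac:(apply offdiag_In; lia)) as B1.
   pose proof (Lam_bound eps n l' He Hn Hmu Hl (0%nat, i) ltac:(apply offdiag_In; lia)) as B2.
   simpl in B1, B2. fold (T0 eps) in B1, B2. unfold l' in B1, B2 |- *.
   assert (Hi0 : (0 <? d)%nat = true) by (apply Nat.ltb_lt; lia). assert (Hid : (i <? d)%nat = true) by (apply Nat.ltb_lt; lia).
   rewrite Hi0, Hid in *. pose proof (Rle_abs (T0 eps)). pose proof (Rle_abs (- T0 eps)). rewrite Rabs_Ropp in H0. unfold b. lra. Qed.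

End Lam.

Lemma rsum_deriv al (Hal : 0 < al < 1) (l : list (nat * nat)) (w a c : nat * nat -> R) :
  derivable_pt_lim (fun h => rsum l (fun e => w e * phi al (a e + c e * h))) 0 (rsum l (fun e => w e * (c e * psi al (a e)))).
Proof. induction l as [|e l IH].
 - rewrite rsum_nil. assert (E : (fun h : R => rsum [] (fun e => w e * phi al (a e + c e * h))) = fct_cte 0) by reflexivity.
   rewrite E. apply derivable_pt_lim_const.
 - rewrite rsum_cons. assert (E : (fun h : R => rsum (e :: l) (fun e => w e * phi al (a e + c e * h))) =
     plus_fct (mult_real_fct (w e) (fun h => phi al (a e + c e * h))) (fun h => rsum l (fun e => w e * phi al (a e + c e * h)))) by reflexivity.
   rewrite E. apply derivable_pt_lim_plus; auto. apply derivable_pt_lim_scal. apply phi_deriv; auto. Qed.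

Lemma deriv_min0 (f : R -> R) l : derivable_pt_lim f 0 l -> (forall h, f 0 <= f h) -> l = 0.
Proof. intros D H. set (pr := exist (fun l => derivable_pt_abs f 0 l) l D : derivable_pt f 0).
 rewrite <- (derive_pt_eq_0 f 0 l pr D). apply (deriv_minimum f (-1) 1 0 pr); try lra. intros; apply H. Qed.

Lemma sum_fst_pick d r (g : nat -> nat -> R) : (r < d)%nat ->
  rsum (offdiag d) (fun e => (if Nat.eqb (fst e) r then 1 else 0) * g (fst e) (snd e)) = rsum (offs d r) (fun s => g r s).
Proof. intros Hr. rewrite (sum_offdiag d (fun x y => (if Nat.eqb x r then 1 else 0) * g x y)).
 rewrite (rsum_ext _ _ (fun x => if Nat.eqb x r then rsum (offs d x) (fun s => g x s) else 0)).
 apply (rsum_pick (seq 0 d) r (fun x => rsum (offs d x) (fun s => g x s))). apply seq_NoDup. apply in_seq; lia.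
 intros x _. destruct (Nat.eqb x r). apply rsum_ext; intros; ring. rewrite (rsum_ext _ _ (fun _ => 0)). apply rsum_zero. intros; ring. Qed.

Lemma sum_snd_pick d r (g : nat -> nat -> R) : (r < d)%nat ->
  rsum (offdiag d) (fun e => (if Nat.eqb (snd e) r then 1 else 0) * g (fst e) (snd e)) = rsum (offs d r) (fun s => g s r).
Proof. intros Hr. rewrite (sum_offdiag_T d (fun x y => (if Nat.eqb y r then 1 else 0) * g x y)).
 rewrite (rsum_ext _ _ (fun y => if Nat.eqb y r then rsum (offs d y) (fun s => g s y) else 0)).
 apply (rsum_pick (seq 0 d) r (fun y => rsum (offs d y) (fun s => g s y))). apply seq_NoDup. apply in_seq; lia.
 intros y _. destruct (Nat.eqb y r). apply rsum_ext; intros; ring. rewrite (rsum_ext _ _ (fun _ => 0)). apply rsum_zero. intros; ring. Qed.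

Theorem first_order d al mu ls : 0 < al < 1 -> (forall l, Lam d al mu ls <= Lam d al mu l) ->
  forall r, (r < d)%nat ->
  rsum (offs d r) (fun s => INR (mu r s) * psi al (ls r - ls s)) = rsum (offs d r) (fun s => INR (mu s r) * psi al (ls s - ls r)).
Proof. intros Hal Hmin r Hr.
 set (c := fun e : nat * nat => (if Nat.eqb (fst e) r then 1 else 0) - (if Nat.eqb (snd e) r then 1 else 0)).
 set (a := fun e : nat * nat => ls (fst e) - ls (snd e)).
 set (w := fun e : nat * nat => INR (mu (fst e) (snd e))).
 assert (Eg : forall h, Lam d al mu (updR ls r (ls r + h)) = rsum (offdiag d) (fun e => w e * phi al (a e + c e * h))).
 { intros h. unfold Lam. apply rsum_ext. intros e _. unfold w, a, c, updR. f_equal. f_equal.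
   destruct (Nat.eqb (fst e) r) eqn:E1, (Nat.eqb (snd e) r) eqn:E2; apply Nat.eqb_eq in E1 || apply Nat.eqb_neq in E1;
   apply Nat.eqb_eq in E2 || apply Nat.eqb_neq in E2; subst; try rewrite E1; try rewrite E2; ring. }
 pose proof (rsum_deriv al Hal (offdiag d) w a c) as D.
 assert (Hm : forall h, (fun h => rsum (offdiag d) (fun e => w e * phi al (a e + c e * h))) 0 <= (fun h => rsum (offdiag d) (fun e => w e * phi al (a e + c e * h))) h).
 { intros h. cbv beta. rewrite <- !Eg. rewrite Rplus_0_r, updR_id. apply Hmin. }
 pose proof (deriv_min0 _ _ D Hm) as Z.
 rewrite (rsum_ext _ _ (fun e => (if Nat.eqb (fst e) r then 1 else 0) * (w e * psi al (a e)) - (if Nat.eqb (snd e) r then 1 else 0) * (w e * psi al (a e)))) in Z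
   by (intros; unfold c; ring).
 rewrite rsum_minus in Z. unfold w, a in Z.
 rewrite (sum_fst_pick d r (fun x y => INR (mu x y) * psi al (ls x - ls y))) in Z by auto.
 rewrite (sum_snd_pick d r (fun x y => INR (mu x y) * psi al (ls x - ls y))) in Z by auto. lra. Qed.

Lemma rprod_exp {I} (l : list I) f : rprod l (fun i => exp (f i)) = exp (rsum l f).
Proof. induction l. unfold rprod, rsum; simpl. rewrite exp_0; auto. rewrite rprod_cons, rsum_cons, IHl, exp_plus. auto. Qed.

Lemma boxes_le ps mu nu : In nu (boxes ps mu) -> forall e, In e ps -> (nu (fst e) (snd e) <= mu (fst e) (snd e))%nat.
Proof. revert nu. induction ps as [|[r s] ps IH]; intros nu Hnu e He; [destruct He|].
 cbn [boxes] in Hnu. apply in_flat_map in Hnu. destruct Hnu as [nu' [Hnu' Hin]]. apply in_map_iff in Hin. destruct Hin as [k [<- Hk]].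
 rewrite in_seq in Hk. destruct e as [a b]. destruct (Nat.eq_dec a r), (Nat.eq_dec b s); subst.
 - simpl. rewrite upd_same. lia.
 - simpl. rewrite upd_other by congruence. destruct He as [E|He]; [congruence|]. apply (IH nu' Hnu' (r, b) He).
 - simpl. rewrite upd_other by congruence. destruct He as [E|He]; [congruence|]. apply (IH nu' Hnu' (a, s) He).
 - simpl. rewrite upd_other by congruence. destruct He as [E|He]; [congruence|]. apply (IH nu' Hnu' (a, b) He). Qed.

Section Conn.
Variable d : nat.
Variable al : R.
Hypothesis Hal : 0 < al < 1.
Variable mu : nat -> nat -> nat.
Variable ls : nat -> R.
Hypothesis Hmin : forall l, Lam d al mu ls <= Lam d al mu l.

Definition yv r s := psi al (ls r - ls s).

Lemma yv_bal : forall r, (r < d)%nat -> rsum (offs d r) (fun s => INR (mu r s) * yv r s) = rsum (offs d r) (fun s => INR (mu s r) * yv s r).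
Proof. intros r Hr. unfold yv. apply first_order; auto. Qed.

Lemma yv_feasible : theta_feasible d mu yv.
Proof. split.
 - intros r s _ _. pose proof (psi_bounds al Hal (ls r - ls s)). unfold yv. lra.
 - apply inF_offs. intros r Hr. rewrite (rsum_ext _ _ (fun s => INR (mu r s) * yv r s)) by (intros; ring).
   rewrite (rsum_ext _ (fun s => yv s r * INR (mu s r)) (fun s => INR (mu s r) * yv s r)) by (intros; ring). apply yv_bal; auto. Qed.

Lemma obj_yv : theta_obj d al mu yv = - Lam d al mu ls.
Proof. unfold theta_obj, Lam. unfold yv at 1.
 rewrite (rsum_ext _ _ (fun e => INR (mu (fst e) (snd e)) * psi al (ls (fst e) - ls (snd e)) * (ls (fst e) - ls (snd e)) - INR (mu (fst e) (snd e)) * phi al (ls (fst e) - ls (snd e)))).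
 2:{ intros e _. rewrite KL_psi by auto. ring. }
 rewrite rsum_minus. pose proof (circ_pot d (fun r s => INR (mu r s) * yv r s) ls yv_bal) as Z. unfold yv in Z. cbv beta in Z.
 rewrite Z. ring. Qed.

Lemma obj_lower x : theta_feasible d mu x -> - Lam d al mu ls <= theta_obj d al mu x.
Proof. intros [Hx HF0]. pose proof (proj1 (inF_offs d (fun r s => x r s * INR (mu r s))) HF0) as HF. cbv beta in HF. unfold theta_obj, Lam.
 assert (Z : rsum (offdiag d) (fun e => x (fst e) (snd e) * INR (mu (fst e) (snd e)) * (ls (fst e) - ls (snd e))) = 0)
   by (apply (circ_pot d (fun r s => x r s * INR (mu r s)) ls); auto).
 apply (Rle_trans _ (rsum (offdiag d) (fun e => x (fst e) (snd e) * INR (mu (fst e) (snd e)) * (ls (fst e) - ls (snd e))) -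
    rsum (offdiag d) (fun e => INR (mu (fst e) (snd e)) * phi al (ls (fst e) - ls (snd e))))). rewrite Z; lra.
 rewrite <- rsum_minus. apply rsum_le. intros [r s] Hrs. apply offdiag_In in Hrs. simpl.
 pose proof (Gibbs al Hal (x r s) (ls r - ls s) (Hx r s ltac:(lia) ltac:(lia))). pose proof (pos_INR (mu r s)).
 replace (x r s * INR (mu r s) * (ls r - ls s) - INR (mu r s) * phi al (ls r - ls s)) with (INR (mu r s) * (x r s * (ls r - ls s) - phi al (ls r - ls s))) by ring.
 apply Rmult_le_compat_l; auto. Qed.

Theorem vartheta_eq : vartheta d al mu = - Lam d al mu ls.
Proof. unfold vartheta. assert (Hex : exists t, is_theta_min d al mu t).
 { exists (theta_obj d al mu yv). exists yv. split; [apply yv_feasible|]. split; auto. intros y Hy. rewrite obj_yv. apply obj_lower; auto. }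
 pose proof (epsilon_spec (inhabits 0) _ Hex) as [x [Hx [Ht Hm]]]. rewrite Ht.
 pose proof (obj_lower x Hx). pose proof (Hm yv yv_feasible). rewrite obj_yv in H0. lra. Qed.

Theorem Amu_eq : Amu d al mu = exp (Lam d al mu ls) * Pbal d mu yv.
Proof. unfold Amu, Pbal. rewrite <- rsum_scal. apply rsum_ext. intros nu Hnu.
 pose proof (boxes_le _ _ _ Hnu) as Hle.
 rewrite (rprod_ext _ _ (fun e => pmf (mu (fst e) (snd e)) (yv (fst e) (snd e)) (nu (fst e) (snd e)) *
   exp (INR (mu (fst e) (snd e)) * phi al (ls (fst e) - ls (snd e))) * exp (- (INR (nu (fst e) (snd e)) * (ls (fst e) - ls (snd e)))))).
 2:{ intros e He. cbv zeta. unfold yv. apply tilt; auto. }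
 rewrite !rprod_mult, !rprod_exp. fold (Lam d al mu ls).
 destruct (classic (balanced d nu)) as [Hb|Hb].
 - rewrite (rsum_ext _ (fun e => - (INR (nu (fst e) (snd e)) * (ls (fst e) - ls (snd e)))) (fun e => - 1 * (INR (nu (fst e) (snd e)) * (ls (fst e) - ls (snd e))))) by (intros; ring).
   rewrite rsum_scal. rewrite (circ_pot d (fun r s => INR (nu r s)) ls) by exact Hb. rewrite Rmult_0_r, exp_0. ring.
 - rewrite indic_false by auto. ring. Qed.

End Conn.

Lemma In_powerset_incl {A} (l : list A) E : In E (powerset l) -> incl E l.
Proof. revert E. induction l as [|a l IH]; intros E HE; simpl in HE.
 - destruct HE as [<-|[]]. intros x [].
 - apply in_app_or in HE. destruct HE as [HE|HE].
   + intros x Hx. right. apply (IH E HE x Hx).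
   + apply in_map_iff in HE. destruct HE as [E' [<- HE']]. intros x [<-|Hx]. left; auto. right. apply (IH E' HE' x Hx). Qed.

Lemma filter_in_powerset {A} (p : A -> bool) l : In (filter p l) (powerset l).
Proof. induction l as [|a l IH]; simpl. left; auto. apply in_or_app. destruct (p a).
 - right. apply in_map. auto.
 - left. auto. Qed.

Lemma Sst_tree d : (1 <= d)%nat -> is_spanning_tree d (Sst d).
Proof. intros Hd. split. apply length_Sst; auto. intros v Hv. destruct v as [|v]. apply rt_refl.
 apply rt_step. right. apply Sst_In. simpl. lia. Qed.

Lemma NKd_ge1 d : (1 <= d)%nat -> 1 <= NKd d.
Proof. intros Hd. unfold NKd. rewrite <- (indic_true (is_spanning_tree d (Sst d))) by (apply Sst_tree; auto).
 apply (rsum_single _ (fun E => indic (is_spanning_tree d E))). apply filter_in_powerset. intros; apply indic_01. Qed.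

Theorem TKd_bounds d (z : nat -> nat -> R) lo hi : (1 <= d)%nat -> 0 <= lo ->
  (forall e, In e (offdiag d) -> lo <= z (fst e) (snd e) <= hi) ->
  lo ^ (d - 1) <= TKd d z <= hi ^ (d - 1).
Proof. intros Hd Hlo Hz. pose proof (NKd_ge1 d Hd) as HN. unfold TKd.
 assert (Hpt : forall E, In E (powerset (offdiag d)) -> indic (is_spanning_tree d E) * lo ^ (d - 1) <= indic (is_spanning_tree d E) * rprod E (fun e => z (fst e) (snd e)) <= indic (is_spanning_tree d E) * hi ^ (d - 1)).
 { intros E HE. destruct (classic (is_spanning_tree d E)) as [Ht|Ht].
   - rewrite indic_true by auto. rewrite !Rmult_1_l. destruct Ht as [Hl _]. rewrite <- Hl, <- !rprod_const.
     apply In_powerset_incl in HE. split; apply rprod_le; intros e He; specialize (Hz e (HE e He)); lra.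
   - rewrite indic_false by auto. lra. }
 assert (S1 : lo ^ (d - 1) * NKd d <= rsum (powerset (offdiag d)) (fun E => indic (is_spanning_tree d E) * rprod E (fun e => z (fst e) (snd e)))).
 { unfold NKd. rewrite <- rsum_scal. apply rsum_le. intros E HE. specialize (Hpt E HE). lra. }
 assert (S2 : rsum (powerset (offdiag d)) (fun E => indic (is_spanning_tree d E) * rprod E (fun e => z (fst e) (snd e))) <= hi ^ (d - 1) * NKd d).
 { unfold NKd. rewrite <- rsum_scal. apply rsum_le. intros E HE. specialize (Hpt E HE). lra. }
 assert (0 < / NKd d) by (apply Rinv_0_lt_compat; lra).
 split.
 - apply (Rmult_le_reg_l (NKd d)); [lra|]. rewrite <- Rmult_assoc, Rinv_r by lra. lra.
 - apply (Rmult_le_reg_l (NKd d)); [lra|]. rewrite <- Rmult_assoc, Rinv_r by lra. lra. Qed.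

Lemma nat_above x : exists N : nat, x <= INR N.
Proof. destruct (archimed x) as [H1 _]. destruct (Z_lt_le_dec (up x) 0) as [Hz|Hz].
 - exists 0%nat. simpl. apply IZR_lt in Hz. lra.
 - exists (Z.to_nat (up x)). rewrite INR_IZR_INZ, Z2Nat.id by auto. lra. Qed.

Lemma sqrt_pow x k : 0 <= x -> sqrt (x ^ k) = sqrt x ^ k.
Proof. intros Hx. induction k. simpl. apply sqrt_1. simpl. rewrite sqrt_mult, IHk; auto. apply pow_le; auto. Qed.

Section Consts.
Variable d : nat.
Variables al eps : R.
Hypothesis Hd : (2 <= d)%nat.
Hypothesis Hal : 0 < al < 1.
Hypothesis Heps : 0 < eps < 1.

Definition Tmax := Rabs (T0 d al eps).
Definition dl := Rmin (1/2) (Rmin (psi al (- Tmax)) (1 - psi al Tmax)).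

Lemma dl_pos : 0 < dl <= 1/2.
Proof. unfold dl. split. apply Rmin_glb_lt. lra. pose proof (psi_bounds al Hal (- Tmax)). pose proof (psi_bounds al Hal Tmax).
 apply Rmin_glb_lt; lra. apply Rmin_l. Qed.

Lemma dl_psi t : Rabs t <= Tmax -> dl <= psi al t <= 1 - dl.
Proof. intros Ht. assert (- Tmax <= t <= Tmax) by (unfold Rabs in Ht; destruct (Rcase_abs t); lra).
 pose proof (psi_mono al Hal (- Tmax) t ltac:(lra)). pose proof (psi_mono al Hal t Tmax ltac:(lra)).
 pose proof (Rmin_r (1/2) (Rmin (psi al (- Tmax)) (1 - psi al Tmax))). pose proof (Rmin_l (psi al (- Tmax)) (1 - psi al Tmax)).
 pose proof (Rmin_r (psi al (- Tmax)) (1 - psi al Tmax)). fold dl in H2. unfold dl in *. lra. Qed.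

Definition Acst := 2 * INR d / sqrt eps.
Definition cL := exp (-2 * (4 * (Acst + 1 + 1) / dl) * (Acst + 1)) / 4.
Definition CU := exp (2 * (12 / dl)) / sqrt eps.
Definition Plow := cL ^ (d - 1) * (3 / 4) ^ (length (Oth d)).
Definition Pup := CU ^ (d - 1).
Definition KC1 := Plow * sqrt eps ^ (d - 1).
Definition KC2 := Rmax KC1 Pup.
Definition KM1 := Rmax (Rmax (24 / dl / sqrt eps) (8 * (Acst + 2) / dl / sqrt eps)) (Rmax (2 * INR d / (dl * eps)) 1).

Lemma seps_pos : 0 < sqrt eps. Proof. apply sqrt_lt_R0; lra. Qed.
Lemma seps_le1 : sqrt eps <= 1. Proof. rewrite <- sqrt_1. apply sqrt_le_1_alt. lra. Qed.

Lemma Acst_ge1 : 1 <= Acst.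
Proof. unfold Acst. pose proof seps_pos. pose proof seps_le1. assert (2 <= INR d) by (apply (le_INR 2); auto).
 apply (Rmult_le_reg_r (sqrt eps)); auto. unfold Rdiv. rewrite Rmult_assoc, Rinv_l by lra. lra. Qed.

Lemma KC1_pos : 0 < KC1.
Proof. unfold KC1, Plow, cL. apply Rmult_lt_0_compat; [apply Rmult_lt_0_compat|]; apply pow_lt.
 apply Rdiv_lt_0_compat; [apply exp_pos|lra]. lra. apply seps_pos. Qed.

End Consts.

Theorem main_fixed d al eps n (mu : nat -> nat -> nat) : (2 <= d)%nat -> 0 < al < 1 -> 0 < eps < 1 ->
  KM1 d al eps <= sqrt (INR n) ->
  (forall r s, (r < d)%nat -> (s < d)%nat -> (mu r s <= n)%nat) ->
  (forall r s, (r < d)%nat -> (s < d)%nat -> r <> s -> INR (mu r s) >= eps * INR n) ->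
  KC1 d al eps * exp (- vartheta d al mu) / sqrt (TKd d (fun r s => INR (mu r s))) <= Amu d al mu /\
  Amu d al mu <= KC2 d al eps * exp (- vartheta d al mu) / sqrt (TKd d (fun r s => INR (mu r s))).
Proof. intros Hd Hal Heps HM Hle Hge.
 set (s := sqrt (INR n)) in *.
 pose proof (dl_pos d al eps Hal) as Hdl. set (dl0 := dl d al eps) in *.
 pose proof (seps_pos eps Heps) as Hse. pose proof (seps_le1 eps Heps) as Hse1.
 set (A := Acst d eps) in *. pose proof (Acst_ge1 d al eps Hd Hal Heps) as HA. fold A in HA.
 unfold KM1 in HM. fold dl0 A in HM.
 assert (Hs1 : 1 <= s) by (eapply Rle_trans; [|exact HM]; eapply Rle_trans; [|apply Rmax_r]; apply Rmax_r).
 assert (Hs2 : 24 / dl0 / sqrt eps <= s) by (eapply Rle_trans; [|exact HM]; eapply Rle_trans; [|apply Rmax_l]; apply Rmax_l).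
 assert (Hs3 : 8 * (A + 2) / dl0 / sqrt eps <= s) by (eapply Rle_trans; [|exact HM]; eapply Rle_trans; [|apply Rmax_l]; apply Rmax_r).
 assert (Hs4 : 2 * INR d / (dl0 * eps) <= s) by (eapply Rle_trans; [|exact HM]; eapply Rle_trans; [|apply Rmax_r]; apply Rmax_l).
 assert (Hss : s * s = INR n) by (apply sqrt_sqrt, pos_INR).
 assert (Hn : 0 < INR n) by nra.
 assert (Hmu : forall e, In e (offdiag d) -> eps * INR n <= INR (mu (fst e) (snd e)) <= INR n).
 { intros [r s0] He. apply offdiag_In in He. simpl. split. apply Rge_le, Hge; lia. apply le_INR, Hle; lia. }
 destruct (Lam_min d al Hal mu eps (INR n) ltac:(lia) ltac:(lra) Hn Hmu) as [ls [Hmin HL0]].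
 assert (Hedge : forall r s0, In (r, s0) (offdiag d) -> Rabs (ls r - ls s0) <= Tmax d al eps).
 { intros r s0 He. pose proof (Lam_bound d al Hal mu eps (INR n) ls ltac:(lra) Hn Hmu HL0 (r, s0) He) as B1.
   assert (He' : In (s0, r) (offdiag d)) by (apply offdiag_In in He; apply offdiag_In; lia).
   pose proof (Lam_bound d al Hal mu eps (INR n) ls ltac:(lra) Hn Hmu HL0 (s0, r) He') as B2. simpl in B1, B2.
   fold (T0 d al eps) in B1, B2. unfold Tmax. pose proof (Rle_abs (T0 d al eps)).
   unfold Rabs at 1. destruct (Rcase_abs (ls r - ls s0)); lra. }
 set (y := yv al ls).
 assert (Hy : forall e, In e (offdiag d) -> dl0 <= y (fst e) (snd e) <= 1 - dl0).
 { intros [r s0] He. simpl. unfold y, yv. apply dl_psi; auto. }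
 assert (Hy01 : forall e, In e (offdiag d) -> 0 <= y (fst e) (snd e) <= 1) by (intros e He; specialize (Hy e He); lra).
 assert (Hsq : forall e, In e (offdiag d) -> sqrt eps * s <= sqrt (INR (mu (fst e) (snd e))) <= s).
 { intros e He. specialize (Hmu e He). unfold s. rewrite <- sqrt_mult by lra. split; apply sqrt_le_1_alt; lra. }
 assert (Hsm : forall e, In e (offdiag d) -> sqrt (INR (mu (fst e) (snd e))) * sqrt (INR (mu (fst e) (snd e))) = INR (mu (fst e) (snd e)))
   by (intros; apply sqrt_sqrt, pos_INR).
 assert (HPu : Pbal d mu y <= (CU d al eps / s) ^ (d - 1)).
 { apply Pbal_upper; auto. lia. unfold CU. apply Rle_mult_inv_pos; [apply Rle_mult_inv_pos|]; try lra. apply Rlt_le, exp_pos.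
   intros e k He Hk. specialize (Hsq e He).
   assert (H24 : 24 / dl0 <= sqrt (INR (mu (fst e) (snd e)))).
   { replace (24 / dl0) with (sqrt eps * (24 / dl0 / sqrt eps)) by (field; lra).
     eapply Rle_trans; [|apply Hsq]. apply Rmult_le_compat_l; lra. }
   eapply Rle_trans. apply (pmf_upper _ _ dl0 Hdl (Hy e He) H24 k Hk). fold dl0.
   unfold CU. fold dl0. unfold Rdiv. rewrite Rmult_assoc. apply Rmult_le_compat_l. apply Rlt_le, exp_pos.
   rewrite <- Rinv_mult. apply Rinv_le_contravar. nra. lra. }
 assert (HdlE : 2 * INR d * s <= dl0 * eps * INR n).
 { rewrite <- Hss. assert (0 < dl0 * eps) by nra.
   assert (2 * INR d <= dl0 * eps * s). { apply (Rmult_le_reg_r (/ (dl0 * eps))). apply Rinv_0_lt_compat; auto.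
     replace (dl0 * eps * s * / (dl0 * eps)) with s by (field; lra). exact Hs4. }
   nra. }
 assert (HPl : (cL d al eps / s) ^ (d - 1) * (3 / 4) ^ (length (Oth d)) <= Pbal d mu y).
 { apply (Pbal_lower d mu y s); auto. lia. lra.
   - unfold cL. apply Rle_mult_inv_pos; [|lra]. apply Rle_mult_inv_pos; [apply Rlt_le, exp_pos|lra].
   - apply (yv_bal d al Hal mu ls Hmin).
   - intros e He. specialize (Hy e He). specialize (Hmu e He).
     assert (y (fst e) (snd e) * (1 - y (fst e) (snd e)) <= 1 / 4) by (pose proof (pow2_ge_0 (y (fst e) (snd e) - 1/2)); simpl in *; nra).
     assert (0 <= y (fst e) (snd e) * (1 - y (fst e) (snd e))) by nra.
     simpl. rewrite Rmult_1_r, Hss. pose proof (pos_INR (mu (fst e) (snd e))). nra.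
   - intros e x He Hx. assert (He' : In e (offdiag d)) by (unfold Sst in He; apply filter_In in He; tauto).
     specialize (Hy e He'). specialize (Hmu e He'). assert (Hab : Rabs (x - INR (mu (fst e) (snd e)) * y (fst e) (snd e)) <= 2 * INR d * s) by exact Hx.
     assert (dl0 * eps * INR n <= INR (mu (fst e) (snd e)) * y (fst e) (snd e)) by (pose proof (Rmult_le_compat (eps * INR n) (INR (mu (fst e) (snd e))) dl0 (y (fst e) (snd e)) ltac:(nra) ltac:(lra) ltac:(lra) ltac:(lra)); lra).
     unfold Rabs in Hab. destruct (Rcase_abs (x - INR (mu (fst e) (snd e)) * y (fst e) (snd e))); lra.
   - intros e k He Hk. assert (He' : In e (offdiag d)) by (unfold Sst in He; apply filter_In in He; tauto).
     pose proof (Hy e He') as Hye. pose proof (Hmu e He') as Hme. pose proof (Hsq e He') as Hqe.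
     assert (Hkk : INR k <= INR (mu (fst e) (snd e))).
     { assert (dl0 * eps * INR n <= dl0 * INR (mu (fst e) (snd e))) by nra.
       unfold Rabs in Hk. destruct (Rcase_abs (INR k - INR (mu (fst e) (snd e)) * y (fst e) (snd e))); nra. }
     apply INR_le in Hkk. split; auto.
     assert (HAs : 2 * INR d * s <= A * sqrt (INR (mu (fst e) (snd e)))).
     { replace (2 * INR d * s) with (A * (sqrt eps * s)) by (unfold A, Acst; field; lra). apply Rmult_le_compat_l; lra. }
     assert (H8 : 8 * (A + 2) / dl0 <= sqrt (INR (mu (fst e) (snd e)))).
     { replace (8 * (A + 2) / dl0) with (sqrt eps * (8 * (A + 2) / dl0 / sqrt eps)) by (field; lra).
       eapply Rle_trans; [|apply Hqe]. apply Rmult_le_compat_l; lra. }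
     pose proof (pmf_lower _ _ dl0 A Hdl Hye HA H8 k Hkk ltac:(lra)) as HL.
     eapply Rle_trans; [|exact HL]. unfold cL. fold dl0 A. unfold Rdiv at 1. unfold Rdiv at 3.
     apply Rmult_le_compat_l. apply Rle_mult_inv_pos; [apply Rlt_le, exp_pos|lra].
     apply Rinv_le_contravar. nra. lra. }
 assert (HT : (eps * INR n) ^ (d - 1) <= TKd d (fun r s0 => INR (mu r s0)) <= INR n ^ (d - 1)).
 { apply TKd_bounds. lia. nra. intros e He. apply Hmu; auto. }
 set (T := TKd d (fun r s0 => INR (mu r s0))) in *.
 set (Q := s ^ (d - 1)).
 assert (HQ : 0 < Q) by (apply pow_lt; lra).
 assert (HsT : sqrt eps ^ (d - 1) * Q <= sqrt T <= Q).
 { unfold Q. rewrite <- Rpow_mult_distr. unfold s. rewrite <- sqrt_mult by (try lra; apply pos_INR). rewrite <- !sqrt_pow by (try apply pos_INR; nra).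
   split; apply sqrt_le_1_alt; lra. }
 assert (HseQ : 0 < sqrt eps ^ (d - 1)) by (apply pow_lt; lra).
 assert (HsTp : 0 < sqrt T) by nra.
 rewrite (Amu_eq d al Hal mu ls). fold y. rewrite (vartheta_eq d al Hal mu ls Hmin). rewrite Ropp_involutive.
 set (Ex := exp (Lam d al mu ls)). assert (HEx : 0 < Ex) by apply exp_pos.
 assert (Ediv : forall x, (x / s) ^ (d - 1) = x ^ (d - 1) / Q) by (intros x; unfold Rdiv, Q; rewrite Rpow_mult_distr, pow_inv; reflexivity).
 rewrite Ediv in HPu, HPl.
 set (P := Pbal d mu y) in *.
 assert (HPl' : Plow d al eps <= P * Q).
 { unfold Plow. apply (Rmult_le_compat_r Q) in HPl; [|lra].
   replace (cL d al eps ^ (d - 1) / Q * (3 / 4) ^ length (Oth d) * Q) with (cL d al eps ^ (d - 1) * (3 / 4) ^ length (Oth d)) in HPl by (field; lra). exact HPl. }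
 assert (HPu' : P * Q <= Pup d al eps).
 { unfold Pup. apply (Rmult_le_compat_r Q) in HPu; [|lra].
   replace (CU d al eps ^ (d - 1) / Q * Q) with (CU d al eps ^ (d - 1)) in HPu by (field; lra). exact HPu. }
 assert (HP0 : 0 <= P) by (unfold P, Pbal; apply rsum_nonneg; intros; apply Rmult_le_pos; [apply indic_01|apply rprod_nonneg; intros; apply pmf_nonneg; auto]).
 split.
 - unfold Rdiv. apply (Rmult_le_reg_r (sqrt T)); auto. rewrite Rmult_assoc, Rinv_l by lra. rewrite Rmult_1_r.
   unfold KC1. assert (Plow d al eps * sqrt eps ^ (d - 1) <= P * sqrt T).
   { assert (P * (sqrt eps ^ (d - 1) * Q) <= P * sqrt T) by (apply Rmult_le_compat_l; lra).
     assert (Plow d al eps * sqrt eps ^ (d - 1) <= P * Q * sqrt eps ^ (d - 1)) by (apply Rmult_le_compat_r; lra). nra. }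
   assert (Ex * (Plow d al eps * sqrt eps ^ (d - 1)) <= Ex * (P * sqrt T)) by (apply Rmult_le_compat_l; lra). nra.
 - unfold Rdiv. apply (Rmult_le_reg_r (sqrt T)); auto. rewrite (Rmult_assoc (KC2 d al eps * Ex)), Rinv_l by lra. rewrite Rmult_1_r.
   assert (P * sqrt T <= KC2 d al eps).
   { assert (P * sqrt T <= P * Q) by (apply Rmult_le_compat_l; lra). unfold KC2. pose proof (Rmax_r (KC1 d al eps) (Pup d al eps)). lra. }
   assert (Ex * (P * sqrt T) <= Ex * KC2 d al eps) by (apply Rmult_le_compat_l; lra). nra.
Qed.

Theorem mainTheorem10 (d : nat) (alpha eps : R) :
  (2 <= d)%nat -> 0 < alpha < 1 -> 0 < eps < 1 ->
  exists C1 C2 : R, 0 < C1 /\ C1 <= C2 /\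
  exists N0 : nat, forall n : nat, (N0 <= n)%nat ->
  forall mu : nat -> nat -> nat,
    (forall r s, (r < d)%nat -> (s < d)%nat -> (mu r s <= n)%nat) ->
    (forall r s, (r < d)%nat -> (s < d)%nat -> r <> s -> INR (mu r s) >= eps * INR n) ->
    C1 * exp (- vartheta d alpha mu) / sqrt (TKd d (fun r s => INR (mu r s)))
      <= Amu d alpha mu /\
    Amu d alpha mu
      <= C2 * exp (- vartheta d alpha mu) / sqrt (TKd d (fun r s => INR (mu r s))).
Proof. intros Hd Hal Heps. exists (KC1 d alpha eps), (KC2 d alpha eps). split; [apply KC1_pos; auto|]. split; [apply Rmax_l|].
 destruct (nat_above (KM1 d alpha eps ^ 2)) as [N0 HN0]. exists N0. intros n Hn mu Hle Hge.
 apply (main_fixed d alpha eps n mu); auto.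
 assert (H1 : 1 <= KM1 d alpha eps) by (unfold KM1; eapply Rle_trans; [|apply Rmax_r]; apply Rmax_r).
 rewrite <- (sqrt_pow2 (KM1 d alpha eps)) by lra. apply sqrt_le_1_alt. apply le_INR in Hn. lra. Qed.
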